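(* There exists a $5$-dimensional prismatoid with $24$ vertices, $12$ of them in each of its two base facets, whose width is $6$.
   Context: A polytope is the convex hull of finitely many points in $\mathbb{R}^d$; it is $d$-dimensional if its vertices are not contained in a hyperplane. A prismatoid is a polytope having two parallel facets (its base facets) which together contain all of its vertices. The facet-ridge graph of a $d$-polytope has one node for each facet (face of dimension $d-1$), with two facets adjacent when they share a ridge (face of dimension $d-2$). The width of a prismatoid is the distance between its two base facets in the facet-ridge graph. *)

(* Defs.v *)
(* Polytopes given by a finite indexed family of points
   v : 'I_n -> 'rV[R]_d ; faces are described by their vertex sets. *)
From HB Require Import structures.
From mathcomp Require Import all_boot all_order all_algebra.
From mathcomp Require Import Rstruct.
Set Implicit Arguments.
Unset Strict Implicit.
Unset Printing Implicit Defensive.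
Import Order.TTheory GRing.Theory Num.Theory.
Local Open Scope ring_scope.

Section Polytopes.
Variables (R : realFieldType) (d n : nat).
Implicit Types (v : 'I_n -> 'rV[R]_d) (a x : 'rV[R]_d) (W : {set 'I_n}).

Definition dotp a x : R := \sum_(j < d) a 0 j * x 0 j.

Definition in_conv_hull v (S : {set 'I_n}) x : Prop :=
  exists lam : 'I_n -> R,
    [/\ forall j, 0 <= lam j,
        forall j, j \notin S -> lam j = 0,
        \sum_(j < n) lam j = 1 &
        \sum_(j < n) lam j *: v j = x].

(* every v i is a vertex of conv(v): it is not in the convex hull of the others;
   so conv(v) has exactly n (distinct) vertices, namely the v i *)
Definition all_vertices v : Prop :=
  forall i, ~ in_conv_hull v (~: [set i]) (v i).

Definition full_dim v : Prop :=
  ~ exists a (b : R), a != 0 /\ forall i, dotp a (v i) = b.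

Definition is_face v W : Prop :=
  W != set0 /\
  exists a (b : R), (forall i, dotp a (v i) <= b) /\
                    (forall i, (i \in W) <-> dotp a (v i) = b).

(* the points v i, i in W, have affine dimension k
   (rank of the homogenized coordinate matrix equals k+1) *)
Definition aff_dim v W (k : nat) : Prop :=
  \rank (\matrix_(i < n) (if i \in W then row_mx (v i) (1 : 'rV[R]_1)
                          else 0)) = k.+1.

Definition is_facet v W : Prop := is_face v W /\ aff_dim v W d.-1.
Definition is_ridge v W : Prop := is_face v W /\ aff_dim v W d.-2.

Definition fr_adj v F G : Prop :=
  [/\ is_facet v F, is_facet v G, F != G &
      exists Rg, is_ridge v Rg /\ Rg \subset F :&: G].

Fixpoint fr_walk v (k : nat) F G : Prop :=
  match k with
  | 0 => F = G /\ is_facet v F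
  | k'.+1 => exists H, fr_adj v F H /\ fr_walk v k' H G
  end.

Definition fr_dist v F G (k : nat) : Prop :=
  fr_walk v k F G /\ forall m, (m < k)%N -> ~ fr_walk v m F G.

Definition prismatoid_bases v F1 F2 : Prop :=
  [/\ is_facet v F1, is_facet v F2, F1 != F2,
      F1 :|: F2 = setT &
      exists a (b1 b2 : R), a != 0 /\
        (forall i, i \in F1 -> dotp a (v i) = b1) /\
        (forall i, i \in F2 -> dotp a (v i) = b2)].

End Polytopes.

(* Main.v *)
From Stdlib Require Import ZArith.
Require Import Defs.
From HB Require Import structures.
From mathcomp Require Import all_boot all_order all_algebra.
From mathcomp Require Import Rstruct.
From Stdlib Require Rdefinitions.
From Stdlib Require RIneq.
Set Implicit Arguments.
Unset Strict Implicit.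
Unset Printing Implicit Defensive.
Import Order.TTheory GRing.Theory Num.Theory.
Delimit Scope Z_scope with Z.
From Stdlib Require Import Lia.
From mathcomp Require Import zify.
Lemma Z_eqP : Equality.axiom Z.eqb.
Proof. move=> x y; exact: Z.eqb_spec. Qed.
HB.instance Definition _ := hasDecEq.Build Z Z_eqP.
Section Gen.
Variable F : fieldType.
Local Open Scope ring_scope.

Definition restr m n (W : {set 'I_m}) (A : 'M[F]_(m, n)) : 'M[F]_(m, n) :=
  \matrix_(i < m) (if i \in W then row i A else 0).

Lemma row_restr m n (W : {set 'I_m}) (A : 'M[F]_(m, n)) i :
  row i (restr W A) = if i \in W then row i A else 0.
Proof. by rewrite rowK. Qed.

Lemma rank_restr_card m n (W : {set 'I_m}) (A : 'M[F]_(m, n)) :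
  (\rank (restr W A) <= #|W|)%N.
Proof.
pose B := \matrix_(k < #|W|) row (enum_val k) A.
have sub : (restr W A <= B)%MS.
  apply/row_subP => i; rewrite row_restr; case: ifP => Hi; last exact: sub0mx.
  apply: (eq_row_sub (enum_rank_in Hi i)).
  by rewrite rowK enum_rankK_in.
by apply: leq_trans (mxrankS sub) (rank_leq_row B).
Qed.

Lemma rank_ker_lt m n (A : 'M[F]_(m, n)) (u : 'cV[F]_n) :
  u != 0 -> A *m u = 0 -> (\rank A < n)%N.
Proof.
move=> u0 Au; rewrite ltn_neqAle rank_leq_col andbT.
apply/negP => /eqP full.
have : row_full A by rewrite /row_full full.
case/row_fullP => B BA.
move/eqP: u0; apply; by rewrite -[u]mul1mx -BA -mulmxA Au mulmx0.
Qed.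

Lemma rank_cert m n k (A : 'M[F]_(m, n)) (r : 'I_k -> 'I_m) (X : 'M[F]_(n, k)) (d : F) :
  d != 0 -> rowsub r A *m X = d%:M -> (k <= \rank A)%N.
Proof.
move=> d0 H.
have : (\rank (d%:M : 'M[F]_k) <= \rank A)%N.
  rewrite -H; apply: leq_trans (mxrankM_maxl _ _) _.
  exact: mxrankS (rowsub_sub _ _).
suff -> : \rank (d%:M : 'M[F]_k) = k by [].
apply: mxrank_unit; by rewrite unitmxE det_scalar unitfE expf_neq0.
Qed.

Lemma ker_prop m n (A : 'M[F]_(m, n.+1)) (h c : 'cV[F]_n.+1) :
  \rank A = n -> A *m h = 0 -> A *m c = 0 -> c != 0 -> exists l, h = l *: c.
Proof.
move=> rk Ah Ac c0.
pose N := col_mx h^T c^T.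
have NK : (N <= kermx A^T)%MS.
  apply/sub_kermxP; rewrite mul_col_mx -!trmx_mul Ah Ac trmx0.
  by apply/matrixP => i j; rewrite !mxE; case: splitP => ? ?; rewrite mxE.
have rN : (\rank N <= 1)%N.
  by apply: leq_trans (mxrankS NK) _; rewrite mxrank_ker mxrank_tr rk subSnn.
have cN : (c^T <= N)%MS.
  by apply: (eq_row_sub (rshift 1 0)); apply/rowP => j; rewrite mxE; rewrite (col_mxEd h^T c^T) mxE.
have hN : (h^T <= N)%MS.
  by apply: (eq_row_sub (lshift 1 0)); apply/rowP => j; rewrite mxE; rewrite (col_mxEu h^T c^T) mxE.
have rc : \rank c^T = 1%N.
  apply/eqP; rewrite eqn_leq rank_leq_row lt0n mxrank_eq0.
  by apply: contra c0 => /eqP/(congr1 trmx); rewrite trmxK trmx0 => ->.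
have eqc : (c^T == N)%MS.
  case: (mxrank_leqif_eq cN) => _ <-.
  by rewrite eqn_leq (mxrankS cN) rc rN.
have : (h^T <= c^T)%MS by rewrite (eqmxP eqc).
case/sub_rVP => l hl; exists l.
by apply: (can_inj (@trmxK _ _ _)); rewrite hl linearZ.
Qed.

Lemma row_free_row_neq0 p n (B : 'M[F]_(p, n)) x : row_free B -> row x B != 0.
Proof.
move=> fB; apply/eqP => rx.
have H : (delta_mx 0 x : 'M[F]_(1, p)) *m B = 0 *m B by rewrite mul0mx -rowE rx.
move: (row_free_inj fB H) => /matrixP /(_ 0 x).
by rewrite !mxE !eqxx /= => /eqP; rewrite oner_eq0.
Qed.

Lemma rank_extract m n (W : {set 'I_m}) (A : 'M[F]_(m, n)) k :
  \rank (restr W A) = k ->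
  exists S : {set 'I_m}, [/\ S \subset W, #|S| = k & \rank (restr S A) = k].
Proof.
move=> rk.
set B := restr W A.
pose f := maxrankfun B.
have fr := maxrowsub_free B.
have inW : forall x, f x \in W.
  move=> x; have := row_free_row_neq0 x fr.
  rewrite row_rowsub row_restr; by case: ifP => //; rewrite eqxx.
exists [set f x | x : 'I_(\rank B)]; split.
- by apply/subsetP => y /imsetP [x _ ->].
- by rewrite card_imset ?card_ord //; exact: maxrankfun_inj.
- apply/eqP; rewrite eqn_leq; apply/andP; split.
    apply: leq_trans (rank_restr_card _ _) _.
    by rewrite card_imset ?card_ord ?rk //; exact: maxrankfun_inj.
  have e1 : rowsub f B = rowsub f (restr [set f x | x : 'I_(\rank B)] A).
    apply/row_matrixP => x; rewrite !row_rowsub !row_restr inW.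
    by rewrite imset_f.
  have -> : k = \rank (rowsub f B) by rewrite -rk /f (eq_maxrowsub B).
  rewrite e1.
  exact: mxrankS (rowsub_sub _ _).
Qed.
End Gen.
Local Open Scope Z_scope.
Definition HP : seq (seq Z) := [:: [:: 11; 0; 100; 0; 1; 1];
  [:: -8; 4; 86; 49; 1; 1];
  [:: 5; -8; 51; 88; 1; 1];
  [:: 1; 10; 1; 99; 1; 1];
  [:: -6; -8; -51; 85; 1; 1];
  [:: 8; 6; -86; 49; 1; 1];
  [:: -10; 1; -100; 1; 1; 1];
  [:: 9; -5; -86; -49; 1; 1];
  [:: -4; 10; -49; -88; 1; 1];
  [:: 0; -9; 1; -101; 1; 1];
  [:: 6; 10; 49; -86; 1; 1];
  [:: -10; -5; 87; -49; 1; 1];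
  [:: 97; 26; 3; 10; -1; 1];
  [:: 70; 71; -7; -7; -1; 1];
  [:: 24; 98; 10; 4; -1; 1];
  [:: -26; 96; -10; 3; -1; 1];
  [:: -72; 69; 8; -8; -1; 1];
  [:: -96; 26; -4; 8; -1; 1];
  [:: -95; -27; -3; -9; -1; 1];
  [:: -71; -72; 6; 7; -1; 1];
  [:: -26; -97; -10; -3; -1; 1];
  [:: 26; -95; 9; -2; -1; 1];
  [:: 71; -71; -8; 6; -1; 1];
  [:: 97; -24; 2; -8; -1; 1]].
Definition wedge2 (x y : seq Z) : seq Z :=
  match x, y with
  | [:: x0; x1; x2; x3; x4; x5], [:: y0; y1; y2; y3; y4; y5] => [:: x0*y1 - x1*y0; x0*y2 - x2*y0; x0*y3 - x3*y0; x0*y4 - x4*y0; x0*y5 - x5*y0; x1*y2 - x2*y1; x1*y3 - x3*y1; x1*y4 - x4*y1; x1*y5 - x5*y1; x2*y3 - x3*y2; x2*y4 - x4*y2; x2*y5 - x5*y2; x3*y4 - x4*y3; x3*y5 - x5*y3; x4*y5 - x5*y4]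
  | _, _ => [::] end.
Definition wedge3 (w z : seq Z) : seq Z :=
  match w, z with
  | [:: w0; w1; w2; w3; w4; w5; w6; w7; w8; w9; w10; w11; w12; w13; w14], [:: z0; z1; z2; z3; z4; z5] => [:: w5*z0 - w1*z1 + w0*z2; w6*z0 - w2*z1 + w0*z3; w7*z0 - w3*z1 + w0*z4; w8*z0 - w4*z1 + w0*z5; w9*z0 - w2*z2 + w1*z3; w10*z0 - w3*z2 + w1*z4; w11*z0 - w4*z2 + w1*z5; w12*z0 - w3*z3 + w2*z4; w13*z0 - w4*z3 + w2*z5; w14*z0 - w4*z4 + w3*z5; w9*z1 - w6*z2 + w5*z3; w10*z1 - w7*z2 + w5*z4; w11*z1 - w8*z2 + w5*z5; w12*z1 - w7*z3 + w6*z4; w13*z1 - w8*z3 + w6*z5; w14*z1 - w8*z4 + w7*z5; w12*z2 - w10*z3 + w9*z4; w13*z2 - w11*z3 + w9*z5; w14*z2 - w11*z4 + w10*z5; w14*z3 - w13*z4 + w12*z5]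
  | _, _ => [::] end.
Definition wedge4 (w z : seq Z) : seq Z :=
  match w, z with
  | [:: w0; w1; w2; w3; w4; w5; w6; w7; w8; w9; w10; w11; w12; w13; w14; w15; w16; w17; w18; w19], [:: z0; z1; z2; z3; z4; z5] => [:: - w10*z0 + w4*z1 - w1*z2 + w0*z3; - w11*z0 + w5*z1 - w2*z2 + w0*z4; - w12*z0 + w6*z1 - w3*z2 + w0*z5; - w13*z0 + w7*z1 - w2*z3 + w1*z4; - w14*z0 + w8*z1 - w3*z3 + w1*z5; - w15*z0 + w9*z1 - w3*z4 + w2*z5; - w16*z0 + w7*z2 - w5*z3 + w4*z4; - w17*z0 + w8*z2 - w6*z3 + w4*z5; - w18*z0 + w9*z2 - w6*z4 + w5*z5; - w19*z0 + w9*z3 - w8*z4 + w7*z5; - w16*z1 + w13*z2 - w11*z3 + w10*z4; - w17*z1 + w14*z2 - w12*z3 + w10*z5; - w18*z1 + w15*z2 - w12*z4 + w11*z5; - w19*z1 + w15*z3 - w14*z4 + w13*z5; - w19*z2 + w18*z3 - w17*z4 + w16*z5]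
  | _, _ => [::] end.
Definition wedge5 (w z : seq Z) : seq Z :=
  match w, z with
  | [:: w0; w1; w2; w3; w4; w5; w6; w7; w8; w9; w10; w11; w12; w13; w14], [:: z0; z1; z2; z3; z4; z5] => [:: w14*z1 - w13*z2 + w12*z3 - w11*z4 + w10*z5; -(w14*z0 - w9*z2 + w8*z3 - w7*z4 + w6*z5); w13*z0 - w9*z1 + w5*z3 - w4*z4 + w3*z5; -(w12*z0 - w8*z1 + w5*z2 - w2*z4 + w1*z5); w11*z0 - w7*z1 + w4*z2 - w2*z3 + w0*z5; -(w10*z0 - w6*z1 + w3*z2 - w1*z3 + w0*z4)]
  | _, _ => [::] end.
Definition LF : seq (seq bool * nat) := [:: ([:: true; false; true; true; false; true; false; false; false; false; false; false; true; false; false; false; false; false; false; false; false; false; false; false], 5%nat);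
  ([:: true; false; false; false; false; true; false; true; false; false; true; false; true; false; false; false; false; false; false; false; false; false; false; false], 5%nat);
  ([:: false; false; false; false; false; false; false; true; true; true; true; false; true; false; false; false; false; false; false; false; false; false; false; false], 5%nat);
  ([:: true; true; true; true; true; true; true; true; true; true; true; true; false; false; false; false; false; false; false; false; false; false; false; false], 6%nat);
  ([:: false; false; false; true; true; true; false; false; false; false; false; false; true; true; false; false; false; false; false; false; false; false; false; false], 3%nat);
  ([:: true; false; true; true; false; false; false; false; false; false; false; false; true; true; false; false; false; false; false; false; false; false; false; false], 4%nat);
  ([:: true; false; false; true; false; true; false; false; false; false; false; false; true; true; false; false; false; false; false; false; false; false; false; false], 4%nat);
  ([:: false; false; false; false; false; true; true; true; false; false; false; false; true; true; false; false; false; false; false; false; false; false; false; false], 3%nat);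
  ([:: true; false; false; false; false; true; false; false; false; false; true; false; true; true; false; false; false; false; false; false; false; false; false; false], 4%nat);
  ([:: false; false; false; false; false; true; false; true; false; false; true; false; true; true; false; false; false; false; false; false; false; false; false; false], 4%nat);
  ([:: false; false; false; false; false; false; false; true; true; false; true; false; true; true; false; false; false; false; false; false; false; false; false; false], 4%nat);
  ([:: false; false; false; false; false; false; false; false; true; true; true; false; true; true; false; false; false; false; false; false; false; false; false; false], 4%nat);
  ([:: true; true; true; true; false; false; false; false; false; false; false; false; false; true; false; false; false; false; false; false; false; false; false; false], 5%nat);
  ([:: true; false; false; true; false; true; false; false; false; false; true; false; false; true; false; false; false; false; false; false; false; false; false; false], 5%nat);
  ([:: false; false; false; false; false; true; false; true; true; false; true; false; false; true; false; false; false; false; false; false; false; false; false; false], 5%nat);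
  ([:: true; true; true; false; false; false; false; false; false; false; false; false; true; true; false; false; false; false; false; false; false; false; false; false], 4%nat);
  ([:: true; false; false; false; false; false; false; false; false; false; true; true; true; true; false; false; false; false; false; false; false; false; false; false], 3%nat);
  ([:: false; false; false; false; false; true; true; true; true; false; false; false; false; false; true; false; false; false; false; false; false; false; false; false], 5%nat);
  ([:: true; true; false; true; false; false; false; false; false; false; true; false; false; false; true; false; false; false; false; false; false; false; false; false], 5%nat);
  ([:: false; false; false; true; false; true; false; false; true; false; true; false; false; false; true; false; false; false; false; false; false; false; false; false], 5%nat);
  ([:: false; false; false; true; true; false; false; false; false; false; false; false; true; true; true; false; false; false; false; false; false; false; false; false], 2%nat);
  ([:: false; false; false; true; true; true; false; false; false; false; false; false; false; true; true; false; false; false; false; false; false; false; false; false], 3%nat);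
  ([:: false; false; true; true; false; false; false; false; false; false; false; false; true; true; true; false; false; false; false; false; false; false; false; false], 3%nat);
  ([:: false; false; false; false; false; true; true; true; false; false; false; false; false; true; true; false; false; false; false; false; false; false; false; false], 4%nat);
  ([:: false; false; false; false; false; false; false; false; true; true; true; false; false; true; true; false; false; false; false; false; false; false; false; false], 3%nat);
  ([:: false; true; true; true; false; false; false; false; false; false; false; false; false; true; true; false; false; false; false; false; false; false; false; false], 4%nat);
  ([:: true; true; false; true; false; false; false; false; false; false; false; false; false; true; true; false; false; false; false; false; false; false; false; false], 4%nat);
  ([:: true; false; false; true; false; false; false; false; false; false; true; false; false; true; true; false; false; false; false; false; false; false; false; false], 4%nat);
  ([:: false; false; false; true; false; true; false; false; false; false; true; false; false; true; true; false; false; false; false; false; false; false; false; false], 4%nat);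
  ([:: false; false; false; false; false; true; false; true; true; false; false; false; false; true; true; false; false; false; false; false; false; false; false; false], 4%nat);
  ([:: false; false; false; false; false; true; false; false; true; false; true; false; false; true; true; false; false; false; false; false; false; false; false; false], 4%nat);
  ([:: false; true; true; false; false; false; false; false; false; false; false; false; true; true; true; false; false; false; false; false; false; false; false; false], 3%nat);
  ([:: true; true; false; false; false; false; false; false; false; false; false; false; true; true; true; false; false; false; false; false; false; false; false; false], 3%nat);
  ([:: true; false; false; false; false; false; false; false; false; false; true; true; false; true; true; false; false; false; false; false; false; false; false; false], 3%nat);
  ([:: true; false; false; false; false; false; false; false; false; false; false; true; true; true; true; false; false; false; false; false; false; false; false; false], 2%nat);
  ([:: false; false; false; true; false; true; true; false; true; false; false; false; false; false; false; true; false; false; false; false; false; false; false; false], 5%nat);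
  ([:: false; true; false; true; false; false; false; false; true; false; true; false; false; false; false; true; false; false; false; false; false; false; false; false], 5%nat);
  ([:: true; true; false; false; false; false; false; false; false; false; true; true; false; false; false; true; false; false; false; false; false; false; false; false], 5%nat);
  ([:: false; false; false; false; true; true; false; false; false; false; false; false; true; true; false; true; false; false; false; false; false; false; false; false], 2%nat);
  ([:: false; false; false; false; false; false; true; true; true; false; false; false; false; false; true; true; false; false; false; false; false; false; false; false], 4%nat);
  ([:: false; false; false; false; false; true; true; false; true; false; false; false; false; false; true; true; false; false; false; false; false; false; false; false], 4%nat);
  ([:: false; true; false; true; false; false; false; false; false; false; true; false; false; false; true; true; false; false; false; false; false; false; false; false], 4%nat);
  ([:: true; true; false; false; false; false; false; false; false; false; true; false; false; false; true; true; false; false; false; false; false; false; false; false], 4%nat);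
  ([:: false; false; false; true; false; true; false; false; true; false; false; false; false; false; true; true; false; false; false; false; false; false; false; false], 4%nat);
  ([:: false; false; false; true; false; false; false; false; true; false; true; false; false; false; true; true; false; false; false; false; false; false; false; false], 4%nat);
  ([:: false; false; false; true; true; false; false; false; false; false; false; false; true; false; true; true; false; false; false; false; false; false; false; false], 2%nat);
  ([:: false; false; false; false; true; false; false; false; false; false; false; false; true; true; true; true; false; false; false; false; false; false; false; false], 1%nat);
  ([:: false; false; false; true; true; true; false; false; false; false; false; false; false; false; true; true; false; false; false; false; false; false; false; false], 3%nat);
  ([:: false; false; false; false; true; true; false; false; false; false; false; false; false; true; true; true; false; false; false; false; false; false; false; false], 2%nat);
  ([:: false; false; false; false; false; true; true; false; false; false; false; false; false; true; true; true; false; false; false; false; false; false; false; false], 3%nat);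
  ([:: false; false; false; false; false; false; true; true; false; false; false; false; false; true; true; true; false; false; false; false; false; false; false; false], 3%nat);
  ([:: false; false; false; false; false; false; false; false; true; true; true; false; false; false; true; true; false; false; false; false; false; false; false; false], 3%nat);
  ([:: false; false; false; false; false; false; false; false; true; true; false; false; false; true; true; true; false; false; false; false; false; false; false; false], 2%nat);
  ([:: false; true; true; true; false; false; false; false; false; false; false; false; false; false; true; true; false; false; false; false; false; false; false; false], 3%nat);
  ([:: false; false; false; false; false; false; false; true; true; false; false; false; false; true; true; true; false; false; false; false; false; false; false; false], 3%nat);
  ([:: true; false; false; false; false; false; false; false; false; false; true; true; false; false; true; true; false; false; false; false; false; false; false; false], 4%nat);
  ([:: false; false; false; true; true; true; true; false; false; false; false; false; false; false; false; false; true; false; false; false; false; false; false; false], 5%nat);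
  ([:: false; true; false; true; false; false; true; false; true; false; false; false; false; false; false; false; true; false; false; false; false; false; false; false], 5%nat);
  ([:: false; true; false; false; false; false; false; false; true; false; true; true; false; false; false; false; true; false; false; false; false; false; false; false], 5%nat);
  ([:: false; false; false; false; false; false; false; false; false; true; true; false; false; true; true; false; true; false; false; false; false; false; false; false], 2%nat);
  ([:: false; false; false; true; false; true; true; false; false; false; false; false; false; false; false; true; true; false; false; false; false; false; false; false], 4%nat);
  ([:: false; false; false; true; false; false; true; false; true; false; false; false; false; false; false; true; true; false; false; false; false; false; false; false], 4%nat);
  ([:: false; true; false; true; false; false; false; false; true; false; false; false; false; false; false; true; true; false; false; false; false; false; false; false], 4%nat);
  ([:: false; true; false; false; false; false; false; false; true; false; true; false; false; false; false; true; true; false; false; false; false; false; false; false], 4%nat);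
  ([:: false; true; false; false; false; false; false; false; false; false; true; true; false; false; false; true; true; false; false; false; false; false; false; false], 4%nat);
  ([:: true; true; false; false; false; false; false; false; false; false; false; true; false; false; false; true; true; false; false; false; false; false; false; false], 4%nat);
  ([:: false; false; false; false; false; false; true; true; true; false; false; false; false; false; false; true; true; false; false; false; false; false; false; false], 3%nat);
  ([:: true; true; false; false; false; false; false; false; false; false; false; false; false; false; true; true; true; false; false; false; false; false; false; false], 3%nat);
  ([:: false; false; false; true; true; true; false; false; false; false; false; false; false; false; false; true; true; false; false; false; false; false; false; false], 4%nat);
  ([:: false; false; false; false; false; false; false; false; true; true; true; false; false; false; false; true; true; false; false; false; false; false; false; false], 3%nat);
  ([:: false; false; false; false; false; false; false; false; false; true; true; false; false; false; true; true; true; false; false; false; false; false; false; false], 2%nat);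
  ([:: false; false; false; false; false; false; false; false; true; true; false; false; false; true; false; true; true; false; false; false; false; false; false; false], 2%nat);
  ([:: false; false; false; false; false; false; false; false; false; true; false; false; false; true; true; true; true; false; false; false; false; false; false; false], 1%nat);
  ([:: false; true; true; true; false; false; false; false; false; false; false; false; false; false; false; true; true; false; false; false; false; false; false; false], 3%nat);
  ([:: false; true; true; false; false; false; false; false; false; false; false; false; false; false; true; true; true; false; false; false; false; false; false; false], 2%nat);
  ([:: true; false; false; false; false; false; false; false; false; false; false; true; false; false; true; true; true; false; false; false; false; false; false; false], 3%nat);
  ([:: false; false; false; false; false; false; false; false; false; false; true; true; false; false; true; true; true; false; false; false; false; false; false; false], 3%nat);
  ([:: false; true; false; true; true; false; true; false; false; false; false; false; false; false; false; false; false; true; false; false; false; false; false; false], 5%nat);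
  ([:: false; true; false; false; false; false; true; false; true; false; false; true; false; false; false; false; false; true; false; false; false; false; false; false], 5%nat);
  ([:: false; false; false; false; false; false; false; false; true; true; true; true; false; false; false; false; false; true; false; false; false; false; false; false], 5%nat);
  ([:: false; false; true; true; false; false; false; false; false; false; false; false; true; false; true; false; false; true; false; false; false; false; false; false], 2%nat);
  ([:: false; false; false; true; false; false; false; false; false; false; false; false; true; false; true; true; false; true; false; false; false; false; false; false], 1%nat);
  ([:: false; false; false; true; true; false; false; false; false; false; false; false; true; false; false; true; false; true; false; false; false; false; false; false], 2%nat);
  ([:: false; false; true; true; false; false; false; false; false; false; false; false; false; false; true; true; false; true; false; false; false; false; false; false], 2%nat);
  ([:: false; false; false; false; true; true; true; false; false; false; false; false; false; false; false; false; true; true; false; false; false; false; false; false], 4%nat);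
  ([:: false; false; false; true; true; false; true; false; false; false; false; false; false; false; false; false; true; true; false; false; false; false; false; false], 4%nat);
  ([:: false; true; false; true; false; false; true; false; false; false; false; false; false; false; false; false; true; true; false; false; false; false; false; false], 4%nat);
  ([:: false; true; false; false; false; false; true; false; true; false; false; false; false; false; false; false; true; true; false; false; false; false; false; false], 4%nat);
  ([:: false; true; false; false; false; false; false; false; true; false; false; true; false; false; false; false; true; true; false; false; false; false; false; false], 4%nat);
  ([:: false; false; false; false; false; false; false; false; true; false; true; true; false; false; false; false; true; true; false; false; false; false; false; false], 4%nat);
  ([:: false; false; false; false; false; true; true; false; false; false; false; false; false; false; false; true; true; true; false; false; false; false; false; false], 3%nat);
  ([:: true; true; false; false; false; false; false; false; false; false; false; true; false; false; false; false; true; true; false; false; false; false; false; false], 3%nat);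
  ([:: false; false; false; false; false; false; true; true; true; false; false; false; false; false; false; false; true; true; false; false; false; false; false; false], 3%nat);
  ([:: false; false; false; false; false; false; true; true; false; false; false; false; false; false; false; true; true; true; false; false; false; false; false; false], 2%nat);
  ([:: false; false; false; false; true; true; false; false; false; false; false; false; false; false; false; true; true; true; false; false; false; false; false; false], 3%nat);
  ([:: false; false; false; true; true; false; false; false; false; false; false; false; false; false; false; true; true; true; false; false; false; false; false; false], 3%nat);
  ([:: false; false; false; false; false; false; false; false; true; true; true; false; false; false; false; false; true; true; false; false; false; false; false; false], 4%nat);
  ([:: false; true; true; true; false; false; false; false; false; false; false; false; false; false; false; false; true; true; false; false; false; false; false; false], 3%nat);
  ([:: false; false; true; true; false; false; false; false; false; false; false; false; false; false; false; true; true; true; false; false; false; false; false; false], 2%nat);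
  ([:: false; true; true; false; false; false; false; false; false; false; false; false; false; false; true; false; true; true; false; false; false; false; false; false], 2%nat);
  ([:: false; false; true; false; false; false; false; false; false; false; false; false; false; false; true; true; true; true; false; false; false; false; false; false], 1%nat);
  ([:: false; true; true; true; true; false; false; false; false; false; false; false; false; false; false; false; false; false; true; false; false; false; false; false], 5%nat);
  ([:: false; true; false; false; true; false; true; false; false; false; false; true; false; false; false; false; false; false; true; false; false; false; false; false], 5%nat);
  ([:: false; false; false; false; false; false; true; false; true; true; false; true; false; false; false; false; false; false; true; false; false; false; false; false], 5%nat);
  ([:: false; false; false; false; false; false; false; true; true; false; false; false; false; true; false; true; false; false; true; false; false; false; false; false], 2%nat);
  ([:: false; false; false; false; false; false; false; true; true; false; false; false; false; false; false; true; true; false; true; false; false; false; false; false], 2%nat);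
  ([:: false; false; false; false; false; false; false; false; true; true; false; false; false; true; false; false; true; false; true; false; false; false; false; false], 2%nat);
  ([:: false; false; false; false; false; false; false; false; true; false; false; false; false; true; false; true; true; false; true; false; false; false; false; false], 1%nat);
  ([:: false; true; false; true; true; false; false; false; false; false; false; false; false; false; false; false; false; true; true; false; false; false; false; false], 4%nat);
  ([:: false; true; false; false; true; false; true; false; false; false; false; false; false; false; false; false; false; true; true; false; false; false; false; false], 4%nat);
  ([:: false; true; false; false; false; false; true; false; false; false; false; true; false; false; false; false; false; true; true; false; false; false; false; false], 4%nat);
  ([:: false; false; false; false; false; false; true; false; true; false; false; true; false; false; false; false; false; true; true; false; false; false; false; false], 4%nat);
  ([:: false; false; false; false; false; false; false; false; true; true; false; true; false; false; false; false; false; true; true; false; false; false; false; false], 4%nat);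
  ([:: false; false; false; false; false; false; false; false; false; true; true; true; false; false; false; false; false; true; true; false; false; false; false; false], 4%nat);
  ([:: false; false; false; false; true; true; true; false; false; false; false; false; false; false; false; false; false; true; true; false; false; false; false; false], 3%nat);
  ([:: false; false; false; false; false; false; false; false; false; false; true; true; false; false; false; false; true; true; true; false; false; false; false; false], 3%nat);
  ([:: true; true; false; false; false; false; false; false; false; false; false; true; false; false; false; false; false; true; true; false; false; false; false; false], 3%nat);
  ([:: true; false; false; false; false; false; false; false; false; false; false; true; false; false; false; false; true; true; true; false; false; false; false; false], 2%nat);
  ([:: false; false; false; false; false; false; true; true; true; false; false; false; false; false; false; false; false; true; true; false; false; false; false; false], 3%nat);
  ([:: false; false; false; false; false; false; false; true; true; false; false; false; false; false; false; false; true; true; true; false; false; false; false; false], 2%nat);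
  ([:: false; false; false; false; false; false; true; true; false; false; false; false; false; false; false; true; false; true; true; false; false; false; false; false], 2%nat);
  ([:: false; false; false; false; false; false; false; true; false; false; false; false; false; false; false; true; true; true; true; false; false; false; false; false], 1%nat);
  ([:: false; false; false; false; false; false; false; false; false; true; true; false; false; false; false; false; true; true; true; false; false; false; false; false], 3%nat);
  ([:: false; false; false; false; false; false; false; false; true; true; false; false; false; false; false; false; true; true; true; false; false; false; false; false], 3%nat);
  ([:: false; true; true; true; false; false; false; false; false; false; false; false; false; false; false; false; false; true; true; false; false; false; false; false], 4%nat);
  ([:: false; true; true; false; true; false; false; false; false; false; false; true; false; false; false; false; false; false; false; true; false; false; false; false], 5%nat);
  ([:: false; false; false; false; true; false; true; false; false; true; false; true; false; false; false; false; false; false; false; true; false; false; false; false], 5%nat);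
  ([:: false; false; false; false; false; false; true; true; true; true; false; false; false; false; false; false; false; false; false; true; false; false; false; false], 5%nat);
  ([:: false; true; true; false; false; false; false; false; false; false; false; false; true; false; true; false; false; false; false; true; false; false; false; false], 2%nat);
  ([:: true; true; false; false; false; false; false; false; false; false; false; false; false; false; true; false; true; false; false; true; false; false; false; false], 2%nat);
  ([:: false; false; true; false; false; false; false; false; false; false; false; false; true; false; true; false; false; true; false; true; false; false; false; false], 1%nat);
  ([:: false; false; true; true; false; false; false; false; false; false; false; false; true; false; false; false; false; true; false; true; false; false; false; false], 2%nat);
  ([:: true; true; false; false; false; false; false; false; false; false; false; false; false; false; false; false; true; true; false; true; false; false; false; false], 2%nat);
  ([:: false; true; true; false; false; false; false; false; false; false; false; false; false; false; true; false; false; true; false; true; false; false; false; false], 2%nat);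
  ([:: false; true; false; false; false; false; false; false; false; false; false; false; false; false; true; false; true; true; false; true; false; false; false; false], 1%nat);
  ([:: false; false; true; true; true; false; false; false; false; false; false; false; false; false; false; false; false; false; true; true; false; false; false; false], 4%nat);
  ([:: false; true; true; false; true; false; false; false; false; false; false; false; false; false; false; false; false; false; true; true; false; false; false; false], 4%nat);
  ([:: false; true; false; false; true; false; false; false; false; false; false; true; false; false; false; false; false; false; true; true; false; false; false; false], 4%nat);
  ([:: false; false; false; false; true; false; true; false; false; false; false; true; false; false; false; false; false; false; true; true; false; false; false; false], 4%nat);
  ([:: false; false; false; false; false; false; true; false; false; true; false; true; false; false; false; false; false; false; true; true; false; false; false; false], 4%nat);
  ([:: false; false; false; false; false; false; true; false; true; true; false; false; false; false; false; false; false; false; true; true; false; false; false; false], 4%nat);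
  ([:: false; false; false; true; true; false; false; false; false; false; false; false; false; false; false; false; false; true; true; true; false; false; false; false], 3%nat);
  ([:: false; false; false; false; false; false; false; false; false; true; true; true; false; false; false; false; false; false; true; true; false; false; false; false], 3%nat);
  ([:: false; false; false; false; true; true; true; false; false; false; false; false; false; false; false; false; false; false; true; true; false; false; false; false], 3%nat);
  ([:: false; false; false; false; true; true; false; false; false; false; false; false; false; false; false; false; false; true; true; true; false; false; false; false], 2%nat);
  ([:: true; true; false; false; false; false; false; false; false; false; false; true; false; false; false; false; false; false; true; true; false; false; false; false], 3%nat);
  ([:: true; true; false; false; false; false; false; false; false; false; false; false; false; false; false; false; false; true; true; true; false; false; false; false], 2%nat);
  ([:: true; false; false; false; false; false; false; false; false; false; false; true; false; false; false; false; true; false; true; true; false; false; false; false], 2%nat);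
  ([:: true; false; false; false; false; false; false; false; false; false; false; false; false; false; false; false; true; true; true; true; false; false; false; false], 1%nat);
  ([:: false; false; false; false; false; false; true; true; true; false; false; false; false; false; false; false; false; false; true; true; false; false; false; false], 4%nat);
  ([:: false; false; true; true; false; false; false; false; false; false; false; false; false; false; false; false; false; true; true; true; false; false; false; false], 3%nat);
  ([:: false; true; true; false; false; false; false; false; false; false; false; false; false; false; false; false; false; true; true; true; false; false; false; false], 3%nat);
  ([:: true; true; true; false; false; false; false; false; false; false; false; true; false; false; false; false; false; false; false; false; true; false; false; false], 5%nat);
  ([:: false; false; true; false; true; false; false; false; false; true; false; true; false; false; false; false; false; false; false; false; true; false; false; false], 5%nat);
  ([:: false; false; false; false; true; false; true; true; false; true; false; false; false; false; false; false; false; false; false; false; true; false; false; false], 5%nat);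
  ([:: false; false; false; false; false; false; true; true; false; false; false; false; false; true; false; true; false; false; false; false; true; false; false; false], 2%nat);
  ([:: false; false; false; false; false; true; true; false; false; false; false; false; false; false; false; true; false; true; false; false; true; false; false; false], 2%nat);
  ([:: false; false; false; false; false; false; false; true; false; false; false; false; false; true; false; true; false; false; true; false; true; false; false; false], 1%nat);
  ([:: false; false; false; false; false; false; false; true; true; false; false; false; false; true; false; false; false; false; true; false; true; false; false; false], 2%nat);
  ([:: false; false; false; false; false; true; true; false; false; false; false; false; false; false; false; false; false; true; true; false; true; false; false; false], 2%nat);
  ([:: false; false; false; false; false; false; true; true; false; false; false; false; false; false; false; true; false; false; true; false; true; false; false; false], 2%nat);
  ([:: false; false; false; false; false; false; true; false; false; false; false; false; false; false; false; true; false; true; true; false; true; false; false; false], 1%nat);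
  ([:: false; true; true; false; false; false; false; false; false; false; false; true; false; false; false; false; false; false; false; true; true; false; false; false], 4%nat);
  ([:: false; false; true; false; true; false; false; false; false; false; false; true; false; false; false; false; false; false; false; true; true; false; false; false], 4%nat);
  ([:: false; false; false; false; true; false; false; false; false; true; false; true; false; false; false; false; false; false; false; true; true; false; false; false], 4%nat);
  ([:: false; false; false; false; true; false; true; false; false; true; false; false; false; false; false; false; false; false; false; true; true; false; false; false], 4%nat);
  ([:: false; false; false; false; false; false; false; true; true; true; false; false; false; false; false; false; false; false; false; true; true; false; false; false], 4%nat);
  ([:: false; false; false; false; false; false; true; true; false; true; false; false; false; false; false; false; false; false; false; true; true; false; false; false], 4%nat);
  ([:: false; false; true; true; true; false; false; false; false; false; false; false; false; false; false; false; false; false; false; true; true; false; false; false], 3%nat);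
  ([:: false; false; false; false; false; false; false; false; true; true; false; false; false; false; false; false; false; false; true; true; true; false; false; false], 3%nat);
  ([:: false; false; false; false; false; false; false; false; false; true; true; true; false; false; false; false; false; false; false; true; true; false; false; false], 3%nat);
  ([:: false; false; false; false; false; false; false; false; false; true; true; false; false; false; false; false; false; false; true; true; true; false; false; false], 2%nat);
  ([:: false; false; false; false; true; true; true; false; false; false; false; false; false; false; false; false; false; false; false; true; true; false; false; false], 3%nat);
  ([:: false; false; false; false; false; true; true; false; false; false; false; false; false; false; false; false; false; false; true; true; true; false; false; false], 2%nat);
  ([:: false; false; false; false; true; true; false; false; false; false; false; false; false; false; false; false; false; true; false; true; true; false; false; false], 2%nat);
  ([:: false; false; false; false; false; true; false; false; false; false; false; false; false; false; false; false; false; true; true; true; true; false; false; false], 1%nat);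
  ([:: true; true; false; false; false; false; false; false; false; false; false; true; false; false; false; false; false; false; false; true; true; false; false; false], 4%nat);
  ([:: false; false; false; false; false; false; true; true; false; false; false; false; false; false; false; false; false; false; true; true; true; false; false; false], 3%nat);
  ([:: false; false; false; false; false; false; false; true; true; false; false; false; false; false; false; false; false; false; true; true; true; false; false; false], 3%nat);
  ([:: false; false; false; false; true; true; true; true; false; false; false; false; false; false; false; false; false; false; false; false; false; true; false; false], 5%nat);
  ([:: false; false; true; false; true; false; false; true; false; true; false; false; false; false; false; false; false; false; false; false; false; true; false; false], 5%nat);
  ([:: true; false; true; false; false; false; false; false; false; true; false; true; false; false; false; false; false; false; false; false; false; true; false; false], 5%nat);
  ([:: true; true; false; false; false; false; false; false; false; false; false; false; true; false; true; false; false; false; false; false; false; true; false; false], 2%nat);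
  ([:: true; false; false; false; false; false; false; false; false; false; false; true; false; false; true; false; true; false; false; false; false; true; false; false], 2%nat);
  ([:: false; false; false; false; false; false; false; false; false; false; true; true; false; false; false; false; true; false; true; false; false; true; false; false], 2%nat);
  ([:: false; true; false; false; false; false; false; false; false; false; false; false; true; false; true; false; false; false; false; true; false; true; false; false], 1%nat);
  ([:: false; true; true; false; false; false; false; false; false; false; false; false; true; false; false; false; false; false; false; true; false; true; false; false], 2%nat);
  ([:: true; true; false; false; false; false; false; false; false; false; false; false; false; false; true; false; false; false; false; true; false; true; false; false], 2%nat);
  ([:: true; false; false; false; false; false; false; false; false; false; false; false; false; false; true; false; true; false; false; true; false; true; false; false], 1%nat);
  ([:: false; false; false; false; false; false; false; false; false; false; true; true; false; false; false; false; false; false; true; true; false; true; false; false], 2%nat);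
  ([:: true; false; false; false; false; false; false; false; false; false; false; true; false; false; false; false; true; false; false; true; false; true; false; false], 2%nat);
  ([:: false; false; false; false; false; false; false; false; false; false; false; true; false; false; false; false; true; false; true; true; false; true; false; false], 1%nat);
  ([:: true; false; true; false; false; false; false; false; false; false; false; true; false; false; false; false; false; false; false; false; true; true; false; false], 4%nat);
  ([:: true; true; true; false; false; false; false; false; false; false; false; false; false; false; false; false; false; false; false; false; true; true; false; false], 4%nat);
  ([:: false; false; true; false; true; false; false; false; false; true; false; false; false; false; false; false; false; false; false; false; true; true; false; false], 4%nat);
  ([:: false; false; true; false; false; false; false; false; false; true; false; true; false; false; false; false; false; false; false; false; true; true; false; false], 4%nat);
  ([:: false; false; false; false; true; false; true; true; false; false; false; false; false; false; false; false; false; false; false; false; true; true; false; false], 4%nat);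
  ([:: false; false; false; false; true; false; false; true; false; true; false; false; false; false; false; false; false; false; false; false; true; true; false; false], 4%nat);
  ([:: false; true; true; false; false; false; false; false; false; false; false; false; false; false; false; false; false; false; false; true; true; true; false; false], 3%nat);
  ([:: false; false; false; false; false; false; false; true; true; true; false; false; false; false; false; false; false; false; false; false; true; true; false; false], 3%nat);
  ([:: false; false; true; true; true; false; false; false; false; false; false; false; false; false; false; false; false; false; false; false; true; true; false; false], 3%nat);
  ([:: false; false; true; true; false; false; false; false; false; false; false; false; false; false; false; false; false; false; false; true; true; true; false; false], 2%nat);
  ([:: false; false; false; false; false; false; false; false; false; true; true; true; false; false; false; false; false; false; false; false; true; true; false; false], 3%nat);
  ([:: false; false; false; false; false; false; false; false; false; false; true; true; false; false; false; false; false; false; false; true; true; true; false; false], 2%nat);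
  ([:: false; false; false; false; false; false; false; false; false; true; true; false; false; false; false; false; false; false; true; false; true; true; false; false], 2%nat);
  ([:: false; false; false; false; false; false; false; false; false; false; true; false; false; false; false; false; false; false; true; true; true; true; false; false], 1%nat);
  ([:: false; false; false; false; true; true; true; false; false; false; false; false; false; false; false; false; false; false; false; false; true; true; false; false], 4%nat);
  ([:: true; true; false; false; false; false; false; false; false; false; false; false; false; false; false; false; false; false; false; true; true; true; false; false], 3%nat);
  ([:: true; false; false; false; false; false; false; false; false; false; false; true; false; false; false; false; false; false; false; true; true; true; false; false], 3%nat);
  ([:: false; false; true; false; true; true; false; true; false; false; false; false; false; false; false; false; false; false; false; false; false; false; true; false], 5%nat);
  ([:: true; false; true; false; false; false; false; true; false; true; false; false; false; false; false; false; false; false; false; false; false; false; true; false], 5%nat);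
  ([:: true; false; false; false; false; false; false; false; false; true; true; true; false; false; false; false; false; false; false; false; false; false; true; false], 5%nat);
  ([:: false; false; false; false; false; true; true; false; false; false; false; false; true; true; false; false; false; false; false; false; false; false; true; false], 2%nat);
  ([:: false; false; false; false; false; true; false; false; false; false; false; false; true; true; false; true; false; false; false; false; false; false; true; false], 1%nat);
  ([:: false; false; false; false; true; true; false; false; false; false; false; false; true; false; false; true; false; false; false; false; false; false; true; false], 2%nat);
  ([:: false; false; false; false; false; true; true; false; false; false; false; false; false; true; false; true; false; false; false; false; false; false; true; false], 2%nat);
  ([:: false; false; false; true; true; false; false; false; false; false; false; false; true; false; false; false; false; true; false; false; false; false; true; false], 2%nat);
  ([:: false; false; false; false; true; false; false; false; false; false; false; false; true; false; false; true; false; true; false; false; false; false; true; false], 1%nat);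
  ([:: false; false; false; false; true; true; false; false; false; false; false; false; false; false; false; true; false; true; false; false; false; false; true; false], 2%nat);
  ([:: false; false; false; true; false; false; false; false; false; false; false; false; true; false; false; false; false; true; false; true; false; false; true; false], 1%nat);
  ([:: false; false; true; true; false; false; false; false; false; false; false; false; true; false; false; false; false; false; false; true; false; false; true; false], 2%nat);
  ([:: false; false; false; true; true; false; false; false; false; false; false; false; false; false; false; false; false; true; false; true; false; false; true; false], 2%nat);
  ([:: false; false; false; false; false; false; true; true; false; false; false; false; false; true; false; false; false; false; false; false; true; false; true; false], 2%nat);
  ([:: false; false; false; false; false; false; true; false; false; false; false; false; false; true; false; true; false; false; false; false; true; false; true; false], 1%nat);
  ([:: false; false; false; false; false; true; true; false; false; false; false; false; false; false; false; true; false; false; false; false; true; false; true; false], 2%nat);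
  ([:: false; false; false; false; false; true; false; false; false; false; false; false; false; false; false; true; false; true; false; false; true; false; true; false], 1%nat);
  ([:: false; false; false; true; true; false; false; false; false; false; false; false; false; false; false; false; false; false; false; true; true; false; true; false], 2%nat);
  ([:: false; false; false; false; true; true; false; false; false; false; false; false; false; false; false; false; false; true; false; false; true; false; true; false], 2%nat);
  ([:: false; false; false; false; true; false; false; false; false; false; false; false; false; false; false; false; false; true; false; true; true; false; true; false], 1%nat);
  ([:: false; false; false; false; true; true; false; true; false; false; false; false; false; false; false; false; false; false; false; false; false; true; true; false], 4%nat);
  ([:: false; false; false; false; false; true; true; true; false; false; false; false; false; false; false; false; false; false; false; false; false; true; true; false], 4%nat);
  ([:: false; false; true; false; true; false; false; true; false; false; false; false; false; false; false; false; false; false; false; false; false; true; true; false], 4%nat);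
  ([:: false; false; true; false; false; false; false; true; false; true; false; false; false; false; false; false; false; false; false; false; false; true; true; false], 4%nat);
  ([:: true; false; true; false; false; false; false; false; false; true; false; false; false; false; false; false; false; false; false; false; false; true; true; false], 4%nat);
  ([:: true; false; false; false; false; false; false; false; false; true; false; true; false; false; false; false; false; false; false; false; false; true; true; false], 4%nat);
  ([:: false; true; true; false; false; false; false; false; false; false; false; false; true; false; false; false; false; false; false; false; false; true; true; false], 2%nat);
  ([:: false; false; true; false; false; false; false; false; false; false; false; false; true; false; false; false; false; false; false; true; false; true; true; false], 1%nat);
  ([:: true; true; true; false; false; false; false; false; false; false; false; false; false; false; false; false; false; false; false; false; false; true; true; false], 3%nat);
  ([:: false; false; false; false; false; false; true; true; false; false; false; false; false; false; false; false; false; false; false; false; true; true; true; false], 3%nat);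
  ([:: false; false; false; false; false; false; false; true; true; true; false; false; false; false; false; false; false; false; false; false; false; true; true; false], 3%nat);
  ([:: false; false; false; false; false; false; false; true; true; false; false; false; false; false; false; false; false; false; false; false; true; true; true; false], 2%nat);
  ([:: false; false; true; true; true; false; false; false; false; false; false; false; false; false; false; false; false; false; false; false; false; true; true; false], 3%nat);
  ([:: false; false; false; true; true; false; false; false; false; false; false; false; false; false; false; false; false; false; false; false; true; true; true; false], 2%nat);
  ([:: false; false; true; true; false; false; false; false; false; false; false; false; false; false; false; false; false; false; false; true; false; true; true; false], 2%nat);
  ([:: false; false; false; true; false; false; false; false; false; false; false; false; false; false; false; false; false; false; false; true; true; true; true; false], 1%nat);
  ([:: false; false; false; false; false; false; false; false; false; true; true; true; false; false; false; false; false; false; false; false; false; true; true; false], 4%nat);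
  ([:: false; false; false; false; false; true; true; false; false; false; false; false; false; false; false; false; false; false; false; false; true; true; true; false], 3%nat);
  ([:: false; false; false; false; true; true; false; false; false; false; false; false; false; false; false; false; false; false; false; false; true; true; true; false], 3%nat);
  ([:: false; false; false; false; false; false; false; false; false; false; false; false; true; true; true; true; true; true; true; true; true; true; true; true], 0%nat);
  ([:: true; false; true; false; false; true; false; false; false; false; false; false; true; false; false; false; false; false; false; false; false; false; false; true], 4%nat);
  ([:: false; false; true; true; false; true; false; false; false; false; false; false; true; false; false; false; false; false; false; false; false; false; false; true], 4%nat);
  ([:: true; false; false; false; false; true; false; true; false; false; false; false; true; false; false; false; false; false; false; false; false; false; false; true], 4%nat);
  ([:: true; false; false; false; false; false; false; true; false; false; true; false; true; false; false; false; false; false; false; false; false; false; false; true], 4%nat);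
  ([:: false; false; false; false; false; false; false; true; false; true; true; false; true; false; false; false; false; false; false; false; false; false; false; true], 4%nat);
  ([:: false; false; false; false; false; false; false; true; true; true; false; false; true; false; false; false; false; false; false; false; false; false; false; true], 4%nat);
  ([:: true; false; true; false; false; true; false; true; false; false; false; false; false; false; false; false; false; false; false; false; false; false; false; true], 5%nat);
  ([:: false; false; true; true; true; true; false; false; false; false; false; false; false; false; false; false; false; false; false; false; false; false; false; true], 5%nat);
  ([:: true; false; false; false; false; false; false; true; false; true; true; false; false; false; false; false; false; false; false; false; false; false; false; true], 5%nat);
  ([:: false; false; false; true; true; true; false; false; false; false; false; false; true; false; false; false; false; false; false; false; false; false; false; true], 4%nat);
  ([:: false; false; false; false; false; false; true; true; false; false; false; false; true; true; false; false; false; false; false; false; false; false; false; true], 2%nat);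
  ([:: false; false; false; false; false; true; true; true; false; false; false; false; true; false; false; false; false; false; false; false; false; false; false; true], 3%nat);
  ([:: false; false; false; false; false; false; false; true; true; false; false; false; true; true; false; false; false; false; false; false; false; false; false; true], 3%nat);
  ([:: false; false; false; false; false; false; false; false; false; true; true; false; true; true; false; false; false; false; false; false; false; false; false; true], 3%nat);
  ([:: false; false; false; false; false; false; false; false; true; true; false; false; true; true; false; false; false; false; false; false; false; false; false; true], 3%nat);
  ([:: true; true; true; false; false; false; false; false; false; false; false; false; true; false; false; false; false; false; false; false; false; false; false; true], 3%nat);
  ([:: false; false; false; false; false; false; false; false; false; false; true; true; true; true; false; false; false; false; false; false; false; false; false; true], 2%nat);
  ([:: true; false; false; false; false; false; false; false; false; false; true; true; true; false; false; false; false; false; false; false; false; false; false; true], 3%nat);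
  ([:: false; false; false; false; false; false; false; false; false; false; true; true; false; true; true; false; false; false; false; false; false; false; false; true], 2%nat);
  ([:: false; false; false; false; false; false; false; false; false; false; false; true; true; true; true; false; false; false; false; false; false; false; false; true], 1%nat);
  ([:: true; false; false; false; false; false; false; false; false; false; false; true; true; false; true; false; false; false; false; false; false; false; false; true], 2%nat);
  ([:: false; false; false; false; false; false; false; false; false; false; true; false; false; true; true; false; true; false; false; false; false; false; false; true], 1%nat);
  ([:: false; false; false; false; false; false; false; false; false; true; true; false; false; true; false; false; true; false; false; false; false; false; false; true], 2%nat);
  ([:: false; false; false; false; false; false; false; false; false; false; true; true; false; false; true; false; true; false; false; false; false; false; false; true], 2%nat);
  ([:: false; false; false; false; false; false; false; false; true; true; false; false; false; true; false; false; false; false; true; false; false; false; false; true], 2%nat);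
  ([:: false; false; false; false; false; false; false; false; false; true; false; false; false; true; false; false; true; false; true; false; false; false; false; true], 1%nat);
  ([:: false; false; false; false; false; false; false; false; false; true; true; false; false; false; false; false; true; false; true; false; false; false; false; true], 2%nat);
  ([:: false; false; false; false; false; false; false; false; true; false; false; false; false; true; false; false; false; false; true; false; true; false; false; true], 1%nat);
  ([:: false; false; false; false; false; false; false; true; true; false; false; false; false; true; false; false; false; false; false; false; true; false; false; true], 2%nat);
  ([:: false; false; false; false; false; false; false; false; true; true; false; false; false; false; false; false; false; false; true; false; true; false; false; true], 2%nat);
  ([:: true; false; false; false; false; false; false; false; false; false; false; false; true; false; true; false; false; false; false; false; false; true; false; true], 1%nat);
  ([:: true; true; false; false; false; false; false; false; false; false; false; false; true; false; false; false; false; false; false; false; false; true; false; true], 2%nat);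
  ([:: true; false; false; false; false; false; false; false; false; false; false; true; false; false; true; false; false; false; false; false; false; true; false; true], 2%nat);
  ([:: false; false; false; false; false; false; false; false; false; false; false; true; false; false; true; false; true; false; false; false; false; true; false; true], 1%nat);
  ([:: false; false; false; false; false; false; false; false; false; false; true; true; false; false; false; false; true; false; false; false; false; true; false; true], 2%nat);
  ([:: false; false; false; false; false; false; false; false; false; false; true; false; false; false; false; false; true; false; true; false; false; true; false; true], 1%nat);
  ([:: false; false; false; false; false; false; false; false; true; true; false; false; false; false; false; false; false; false; false; false; true; true; false; true], 2%nat);
  ([:: false; false; false; false; false; false; false; false; false; true; true; false; false; false; false; false; false; false; true; false; false; true; false; true], 2%nat);
  ([:: false; false; false; false; false; false; false; false; false; true; false; false; false; false; false; false; false; false; true; false; true; true; false; true], 1%nat);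
  ([:: false; false; true; false; false; true; false; true; false; false; false; false; false; false; false; false; false; false; false; false; false; false; true; true], 4%nat);
  ([:: false; false; true; false; true; true; false; false; false; false; false; false; false; false; false; false; false; false; false; false; false; false; true; true], 4%nat);
  ([:: true; false; true; false; false; false; false; true; false; false; false; false; false; false; false; false; false; false; false; false; false; false; true; true], 4%nat);
  ([:: true; false; false; false; false; false; false; true; false; true; false; false; false; false; false; false; false; false; false; false; false; false; true; true], 4%nat);
  ([:: true; false; false; false; false; false; false; false; false; true; true; false; false; false; false; false; false; false; false; false; false; false; true; true], 4%nat);
  ([:: true; false; false; false; false; false; false; false; false; false; true; true; false; false; false; false; false; false; false; false; false; false; true; true], 4%nat);
  ([:: false; false; false; false; false; false; true; false; false; false; false; false; true; true; false; false; false; false; false; false; false; false; true; true], 1%nat);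
  ([:: false; false; false; false; false; true; true; false; false; false; false; false; true; false; false; false; false; false; false; false; false; false; true; true], 2%nat);
  ([:: false; false; false; false; true; true; false; false; false; false; false; false; true; false; false; false; false; false; false; false; false; false; true; true], 3%nat);
  ([:: false; false; false; true; true; false; false; false; false; false; false; false; true; false; false; false; false; false; false; false; false; false; true; true], 3%nat);
  ([:: false; false; true; true; false; false; false; false; false; false; false; false; true; false; false; false; false; false; false; false; false; false; true; true], 3%nat);
  ([:: false; false; false; false; false; false; true; true; false; false; false; false; false; true; false; false; false; false; false; false; false; false; true; true], 2%nat);
  ([:: false; false; false; false; false; false; false; true; false; false; false; false; false; true; false; false; false; false; false; false; true; false; true; true], 1%nat);
  ([:: false; false; false; false; false; true; true; true; false; false; false; false; false; false; false; false; false; false; false; false; false; false; true; true], 3%nat);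
  ([:: true; false; false; false; false; false; false; false; false; false; false; true; false; false; false; false; false; false; false; false; false; true; true; true], 3%nat);
  ([:: false; true; true; false; false; false; false; false; false; false; false; false; true; false; false; false; false; false; false; false; false; false; true; true], 2%nat);
  ([:: false; true; false; false; false; false; false; false; false; false; false; false; true; false; false; false; false; false; false; false; false; true; true; true], 1%nat);
  ([:: true; true; true; false; false; false; false; false; false; false; false; false; false; false; false; false; false; false; false; false; false; false; true; true], 3%nat);
  ([:: true; true; false; false; false; false; false; false; false; false; false; false; false; false; false; false; false; false; false; false; false; true; true; true], 2%nat);
  ([:: false; false; false; false; false; false; false; true; true; true; false; false; false; false; false; false; false; false; false; false; false; false; true; true], 3%nat);
  ([:: false; false; false; false; false; false; false; false; true; true; false; false; false; false; false; false; false; false; false; false; false; true; true; true], 2%nat);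
  ([:: false; false; false; false; false; false; false; true; true; false; false; false; false; false; false; false; false; false; false; false; true; false; true; true], 2%nat);
  ([:: false; false; false; false; false; false; false; false; true; false; false; false; false; false; false; false; false; false; false; false; true; true; true; true], 1%nat);
  ([:: false; false; true; true; true; false; false; false; false; false; false; false; false; false; false; false; false; false; false; false; false; false; true; true], 4%nat);
  ([:: false; false; false; false; false; false; false; false; false; false; true; true; false; false; false; false; false; false; false; false; false; true; true; true], 3%nat);
  ([:: false; false; false; false; false; false; false; false; false; true; true; false; false; false; false; false; false; false; false; false; false; true; true; true], 3%nat)].
Definition Lbits : seq (seq bool) := map fst LF.
Local Open Scope Z_scope.
Definition pathB : seq (seq bool) := [:: [:: true; true; true; true; true; true; true; true; true; true; true; true; false; false; false; false; false; false; false; false; false; false; false; false];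
  [:: true; false; true; true; false; true; false; false; false; false; false; false; true; false; false; false; false; false; false; false; false; false; false; false];
  [:: true; false; true; true; false; false; false; false; false; false; false; false; true; true; false; false; false; false; false; false; false; false; false; false];
  [:: false; false; true; true; false; false; false; false; false; false; false; false; true; true; true; false; false; false; false; false; false; false; false; false];
  [:: false; false; false; true; true; false; false; false; false; false; false; false; true; true; true; false; false; false; false; false; false; false; false; false];
  [:: false; false; false; false; true; false; false; false; false; false; false; false; true; true; true; true; false; false; false; false; false; false; false; false];
  [:: false; false; false; false; false; false; false; false; false; false; false; false; true; true; true; true; true; true; true; true; true; true; true; true]].
Definition pathH : seq (seq Z) := [:: [:: 0; 0; 0; 0; 1; -1];
  [:: 225008; 46709; 3560; 21570; 10217751; -13048839];
  [:: 135231; 103155; 34654; 37894; 5664699; -10617640];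
  [:: 62307; 64775; 30357; 54648; 1107457; -7258023];
  [:: 63792; 88990; -89748; 187038; -4639003; -14741703];
  [:: 35374; 59222; -102398; 160816; -5966811; -12238827];
  [:: 0; 0; 0; 0; -1; -1]].
Definition pathRC : seq (seq nat * seq (seq Z) * Z) := [:: ([:: 0%nat; 1%nat; 2%nat; 3%nat; 4%nat], [:: [:: 88758; 15653; -8616; -32502; 2981026; 0]; [:: -174390; 13611; 18812; -178; 37090; 0]; [:: 63674; -120961; 22280; 40930; -2928414; 0]; [:: 76812; 155956; -8712; 14564; 26268; 0]; [:: -54854; -64259; -23764; -22814; 2979794; 0]], 3095764);
  ([:: 0%nat; 2%nat; 3%nat; 5%nat; 12%nat], [:: [:: 64618; 414376; 100306; -198636; 15356280; 0]; [:: 350690; -1500313; -6514; 180456; -3206190; 0]; [:: -475722; 1521216; 99180; 161082; -4685058; 0]; [:: 285422; -388570; -189412; -121332; 15801558; 0]; [:: 225008; 46709; 3560; 21570; -2831088; 0]], 26097678);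
  ([:: 0%nat; 2%nat; 3%nat; 12%nat; 13%nat], [:: [:: 263394; 50170; -58284; -251244; 24166346; 0]; [:: -589423; -29875; 575218; 518698; -51038147; 0]; [:: 461260; 82860; -482280; -229560; 43154140; 0]; [:: 420653; -285415; -154758; -83438; 10848617; 0]; [:: -285422; 388570; 189412; 121332; -15801558; 0]], 21235280);
  ([:: 2%nat; 3%nat; 12%nat; 13%nat; 14%nat], [:: [:: -115443; -78313; -278505; 139878; -12670844; 0]; [:: 53136; 13538; 248148; -194526; 4305364; 0]; [:: 92061; 267411; 21789; -305064; 27413376; 0]; [:: -417762; -382356; 6138; 501660; -45429156; 0]; [:: 263394; 50170; -58284; -251244; 24166346; 0]], -14516046);
  ([:: 3%nat; 4%nat; 12%nat; 13%nat; 14%nat], [:: [:: -147339; -122808; -233631; 46359; -17722194; 0]; [:: 115443; 78313; 278505; -139878; 12670844; 0]; [:: 75042; 259052; -22383; -287451; 25814470; 0]; [:: -404658; -375005; 53514; 485712; -43984294; 0]; [:: 297720; 71458; 13743; -291780; 27860177; 0]], -14741703);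
  ([:: 4%nat; 12%nat; 13%nat; 14%nat; 15%nat], [:: [:: 17687; 29611; -51199; 80408; 3136008; 0]; [:: -26969; -185620; 74608; 227530; -17181816; 0]; [:: 141788; 149497; -352312; -342154; 13161882; 0]; [:: 50207; 188542; 460136; 148673; 12639309; 0]; [:: -147339; -122808; -233631; 46359; -17722194; 0]], 12238827);
  ([:: 12%nat; 13%nat; 14%nat; 15%nat; 16%nat], [:: [:: 175; 39536; 460; -97022; 3495240; 0]; [:: -20627; -9982; 43471; 181894; -310998; 0]; [:: -12938; -50851; -131699; -36587; -3338079; 0]; [:: 15703; -8314; 138967; -128693; 436998; 0]; [:: 17687; 29611; -51199; 80408; 3136008; 0]], -3419169)].
Definition ridgeB : seq (seq bool) := [:: [:: true; false; true; true; false; true; false; false; false; false; false; false; false; false; false; false; false; false; false; false; false; false; false; false];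
  [:: true; false; true; true; false; false; false; false; false; false; false; false; true; false; false; false; false; false; false; false; false; false; false; false];
  [:: false; false; true; true; false; false; false; false; false; false; false; false; true; true; false; false; false; false; false; false; false; false; false; false];
  [:: false; false; false; true; false; false; false; false; false; false; false; false; true; true; true; false; false; false; false; false; false; false; false; false];
  [:: false; false; false; false; true; false; false; false; false; false; false; false; true; true; true; false; false; false; false; false; false; false; false; false];
  [:: false; false; false; false; false; false; false; false; false; false; false; false; true; true; true; true; false; false; false; false; false; false; false; false]].
Definition ridgeH : seq (seq Z) := [:: [:: 225008; 46709; 3560; 21570; 10217752; -13048840];
  [:: 360239; 149864; 38214; 59464; 15882450; -23666479];
  [:: 197538; 167930; 65011; 92542; 6772156; -17875663];
  [:: 126099; 153765; -59391; 241686; -3531546; -21999726];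
  [:: 99166; 148212; -192146; 347854; -10605814; -26980530];
  [:: 35374; 59222; -102398; 160816; -5966812; -12238828]].
Definition ridgeRC : seq (seq nat * seq (seq Z) * Z) := [:: ([:: 0%nat; 2%nat; 3%nat; 5%nat], [:: [:: -139408; -72436; -12976; 8856; 0; 0]; [:: -10400; 168493; 1144; -16926; 0; 0]; [:: 92000; -156637; -10120; -13602; 0; 0]; [:: -167200; 13871; 18392; 102; 0; 0]], -2831088);
  ([:: 0%nat; 2%nat; 3%nat; 12%nat], [:: [:: 128822; -479536; -172186; 48876; 0; 0]; [:: -247400; 956143; 27214; -94356; 0; 0]; [:: 236800; -851306; -26048; -75750; 0; 0]; [:: -167200; 13871; 18392; 102; 0; 0]], -15801558);
  ([:: 2%nat; 3%nat; 12%nat; 13%nat], [:: [:: -37723; 86583; 514531; -13562; 0; 0]; [:: -10340; -7658; -430404; 249330; 0; 0]; [:: 344153; -350441; -146343; 33400; 0; 0]; [:: -128822; 479536; 172186; -48876; 0; 0]], 24166346);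
  ([:: 3%nat; 12%nat; 13%nat; 14%nat], [:: [:: 12142; -11410; 134002; -128312; 0; 0]; [:: -137654; 85526; -506934; -2128; 0; 0]; [:: -3370; -88666; 876962; 132; 0; 0]; [:: 37723; -86583; -514531; 13562; 0; 0]], -12670844);
  ([:: 4%nat; 12%nat; 13%nat; 14%nat], [:: [:: 12142; -11410; 134002; -128312; 0; 0]; [:: -167794; 96376; -436024; -264388; 0; 0]; [:: -46862; -84406; 761410; 445594; 0; 0]; [:: 79459; -146188; -425015; -263159; 0; 0]], -17722194);
  ([:: 12%nat; 13%nat; 14%nat; 15%nat], [:: [:: 17920; -5992; -52760; 171184; 0; 0]; [:: 17310; 6462; -35214; -174144; 0; 0]; [:: -5401; 17731; 170777; -44944; 0; 0]; [:: -12142; 11410; -134002; 128312; 0; 0]], 3136008)].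
Definition vcert : seq (seq Z) := [:: [:: 9665411; 633382; 7951779; 318081; 331175128; -1232672549];
  [:: -9154680; 2954417; 6986154; 4243537; 291542069; -1185339734];
  [:: 4038399; -11000784; 3481481; 6598307; 401445110; -1267849924];
  [:: 583693; 10134172; -193517; 7654659; 381466970; -1241010107];
  [:: -4915422; -8021836; -4138157; 7177813; 326152369; -1240979701];
  [:: 9525341; 6167367; -6350584; 3696364; 395752242; -1236231232];
  [:: -9417259; 2122004; -7917525; -432415; 304427089; -1192041768];
  [:: 8887388; -4407529; -9119583; -5054218; 253146415; -1387111372];
  [:: -4805008; 7215558; -4938419; -6438125; 219002166; -1118915309];
  [:: 1368294; -8580892; 900132; -8421659; 146124355; -1074840074];
  [:: 6415923; 7954737; 5632222; -9177791; 125871244; -1309183056];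
  [:: -7086840; -2880148; 7379750; -4394931; 119620844; -1062279853];
  [:: 8923849; 3362995; 2998486; 7392209; -112985260; -1148954031];
  [:: 9098683; 9281153; -6527343; -5053528; -11180013; -1388115783];
  [:: 3339562; 9248777; 8277547; 1148201; -157995108; -1231893016];
  [:: -2581307; 7900400; -7663651; -82454; -137444415; -1039385945];
  [:: -5945353; 6149743; 6410569; -7476356; -261923429; -1225416512];
  [:: -9833650; 1731113; -2644700; 6436743; -51493369; -1102605451];
  [:: -9528660; -1912211; -2466400; -8739284; -212768320; -1255673473];
  [:: -5519786; -5900851; 4616725; 5653017; -172719513; -1056757060];
  [:: -1970217; -8244079; -7402344; -1931367; -205306133; -1136024979];
  [:: 2961676; -10109978; 8678860; -2858311; -197750953; -1319028801];
  [:: 7239662; -7869269; -5661247; 5062433; -60961587; -1209360262];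
  [:: 7718231; -2532011; 3349750; -9535990; -285071371; -1177495462]].
Definition fullRC : seq nat * seq (seq Z) * Z := ([:: 0%nat; 1%nat; 2%nat; 3%nat; 4%nat; 12%nat], [:: [:: 177516; 31306; -17232; -65004; 11646662; -5684610]; [:: -348780; 27222; 37624; -356; -16470198; 16544378]; [:: 127348; -241922; 44560; 81860; 579118; -6435946]; [:: 153624; 311912; -17424; 29128; 11651392; -11598856]; [:: -109708; -128518; -47528; -45628; -4311210; 10270798]; [:: 0; 0; 0; 0; -3095764; 3095764]], 6191528).
Local Close Scope Z_scope.
Definition prow (i : nat) : seq Z := nth [::] HP i.
Definition dot6 (c r : seq Z) : Z :=
  match c, r with
  | [:: c0; c1; c2; c3; c4; c5], [:: r0; r1; r2; r3; r4; r5] =>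
      (c0*r0 + c1*r1 + c2*r2 + c3*r3 + c4*r4 + c5*r5)%Z
  | _, _ => 0%Z end.
Fixpoint sgscan (c : seq Z) (rs : seq (seq Z)) (p n : bool) : bool :=
  match rs with
  | [::] => true
  | r :: rs' => let x := dot6 c r in
      let p' := p || (0 <? x)%Z in let n' := n || (x <? 0)%Z in
      if p' && n' then false else sgscan c rs' p' n'
  end.
Definition goodc (c : seq Z) (s : seq nat) : bool :=
  [&& size c == 6, all (fun i => dot6 c (prow i) =? 0)%Z s, has (fun x => negb (x =? 0)%Z) c &
      (if sgscan c HP false false then
        ([seq (dot6 c r =? 0)%Z | r <- HP] \in Lbits) else true)].
Definition cross5 i0 i1 i2 i3 i4 :=
  wedge5 (wedge4 (wedge3 (wedge2 (prow i0) (prow i1)) (prow i2)) (prow i3)) (prow i4).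
Definition checkA : bool :=
  all (fun i0 => all (fun i1 => let w2 := wedge2 (prow i0) (prow i1) in
    all (fun i2 => let w3 := wedge3 w2 (prow i2) in
    all (fun i3 => let w4 := wedge4 w3 (prow i3) in
    all (fun i4 => goodc (wedge5 w4 (prow i4)) [:: i0; i1; i2; i3; i4])
      (iota i3.+1 (23 - i3))) (iota i2.+1 (23 - i2))) (iota i1.+1 (23 - i1)))
      (iota i0.+1 (23 - i0))) (iota 0 24).

Lemma checkA_ok : checkA = true.
Proof. vm_compute. reflexivity. Qed.

Lemma checkA_sound i0 i1 i2 i3 i4 :
  i0 < i1 -> i1 < i2 -> i2 < i3 -> i3 < i4 -> i4 < 24 ->
  goodc (cross5 i0 i1 i2 i3 i4) [:: i0; i1; i2; i3; i4].
Proof.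
move=> h01 h12 h23 h34 h4.
have h3 : i3 < 24 by apply: ltn_trans h34 h4.
have h2 : i2 < 24 by apply: ltn_trans h23 h3.
have h1 : i1 < 24 by apply: ltn_trans h12 h2.
have h0 : i0 < 24 by apply: ltn_trans h01 h1.
have := checkA_ok; rewrite /checkA.
move/allP/(_ i0); rewrite mem_iota h0 => /(_ isT).
move/allP/(_ i1); rewrite mem_iota h01 addSn subnKC // h1 => /(_ isT).
move/allP/(_ i2); rewrite mem_iota h12 addSn subnKC // h2 => /(_ isT).
move/allP/(_ i3); rewrite mem_iota h23 addSn subnKC // h3 => /(_ isT).
move/allP/(_ i4); rewrite mem_iota h34 addSn subnKC // h4 => /(_ isT).
by [].
Qed.
Notation RR := Rdefinitions.R.
Notation IZR := Rdefinitions.IZR.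

Lemma card_ord_count n (P : nat -> bool) : #|[set i : 'I_n | P i]| = count P (iota 0 n).
Proof.
rewrite cardsE cardE /enum_mem size_filter -enumT -val_enum_ord count_map.
by apply: eq_count.
Qed.

Lemma HP_ok : all (fun r => (size r == 6) && (nth 0%Z r 5 == 1%Z)) HP && (size HP == 24).
Proof. by vm_compute. Qed.

Lemma size_HP : size HP = 24.
Proof. by have /andP[_ /eqP] := HP_ok. Qed.

Lemma prow_ok i : i < 24 -> size (prow i) = 6 /\ nth 0%Z (prow i) 5 = 1%Z.
Proof.
move=> Hi; have /andP[H _] := HP_ok.
have := (all_nthP [::] H) i; rewrite size_HP => /(_ Hi) /andP [/eqP -> /eqP ->].
by [].
Qed.

Local Open Scope ring_scope.

Lemma IZRD a b : IZR (a + b)%Z = IZR a + IZR b.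
Proof. exact: RIneq.plus_IZR. Qed.
Lemma IZRM a b : IZR (a * b)%Z = IZR a * IZR b.
Proof. exact: RIneq.mult_IZR. Qed.
Lemma IZR_inj : injective IZR.
Proof. exact: RIneq.eq_IZR. Qed.
Lemma IZR_leE a b : (IZR a <= IZR b) = (a <=? b)%Z.
Proof.
case: Z.leb_spec => H.
- by apply/RleP; apply: RIneq.IZR_le.
- apply/negP => /RleP /RIneq.le_IZR; lia.
Qed.
Lemma IZR_eq0 a : (IZR a == 0) = (a =? 0)%Z.
Proof.
case: Z.eqb_spec => [->|H]; first by rewrite eqxx.
by apply/negP => /eqP H2; apply: H; apply: IZR_inj.
Qed.

Lemma sum6 (c r : seq Z) : size c = 6 -> size r = 6 ->
  \sum_(j < 6) IZR (nth 0%Z c j) * IZR (nth 0%Z r j) = IZR (dot6 c r).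
Proof.
case: c => [|c0 [|c1 [|c2 [|c3 [|c4 [|c5 [|? ?]]]]]]] //.
case: r => [|r0 [|r1 [|r2 [|r3 [|r4 [|r5 [|? ?]]]]]]] // _ _.
rewrite !big_ord_recr big_ord0 /= !IZRD !IZRM add0r.
by [].
Qed.

Definition vv (i : 'I_24) : 'rV[RR]_5 := \row_(j < 5) IZR (nth 0%Z (prow i) j).
Definition mset (bs : seq bool) : {set 'I_24} := [set i : 'I_24 | nth false bs i].
Definition Afull : 'M[RR]_(24, 5 + 1) := \matrix_(i < 24) row_mx (vv i) (1 : 'rV[RR]_1).

Lemma Am_restr (W : {set 'I_24}) :
  \matrix_(i < 24) (if i \in W then row_mx (vv i) (1 : 'rV[RR]_1) else 0) = restr W Afull.
Proof. by apply/row_matrixP => i; rewrite row_restr !rowK. Qed.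

Lemma Afull_E i (j : 'I_(5 + 1)) : Afull i j = IZR (nth 0%Z (prow i) j).
Proof.
rewrite mxE; case: (splitP j) => k Hk.
- have -> : j = lshift 1 k by apply: val_inj.
  by rewrite row_mxEl mxE.
- have -> : j = rshift 5 k by apply: val_inj.
  rewrite row_mxEr mxE ord1 /= addn0 (proj2 (prow_ok (ltn_ord i))).
  by [].
Qed.

Lemma restrE m n (W : {set 'I_m}) (A : 'M[RR]_(m, n)) i j :
  restr W A i j = if i \in W then A i j else 0.
Proof. by rewrite mxE; case: ifP; rewrite ?mxE. Qed.

Definition hcol (c : seq Z) : 'cV[RR]_(5 + 1) := \col_(j < 5 + 1) IZR (nth 0%Z c j).

Lemma restr_hcol W c i : size c = 6 ->
  (restr W Afull *m hcol c) i 0 = if i \in W then IZR (dot6 c (prow i)) else 0.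
Proof.
move=> sc; rewrite mxE.
case: ifP => iW.
- rewrite -sum6 // ?(proj1 (prow_ok (ltn_ord i))) //.
  apply: eq_bigr => j _; rewrite restrE iW Afull_E mxE mulrC.
  by [].
- by apply: big1 => j _; rewrite restrE iW mul0r.
Qed.

Definition hR (a : 'rV[RR]_5) (b : RR) : 'cV[RR]_(5 + 1) := col_mx a^T (- b)%:M.

Lemma restr_hR W a b i :
  (restr W Afull *m hR a b) i 0 = if i \in W then dotp a (vv i) - b else 0.
Proof.
have -> : (restr W Afull *m hR a b) i 0 = (row i (restr W Afull *m hR a b)) 0 0 by rewrite [RHS]mxE.
rewrite row_mul row_restr.
case: ifP => _; last by rewrite mul0mx mxE.
rewrite rowK mul_row_col mul1mx !mxE eqxx mulr1n.
congr (_ - _); rewrite /dotp; apply: eq_bigr => j _; rewrite !mxE mulrC.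
by [].
Qed.

Lemma dotp_vv (h : seq Z) (i : 'I_24) : size h = 6 ->
  dotp (\row_(j < 5) IZR (nth 0%Z h j)) (vv i) = IZR (dot6 h (prow i)) - IZR (nth 0%Z h 5).
Proof.
move=> sh; have [s6 p5] := prow_ok (ltn_ord i).
rewrite -sum6 // big_ord_recr /= p5 mulr1 addrK.
by apply: eq_bigr => j _; rewrite !mxE.
Qed.
Local Close Scope ring_scope.
Definition checkFace (h : seq Z) (bs : seq bool) : bool :=
  [&& size h == 6, size bs == 24, has id bs &
   all (fun i => let x := dot6 h (prow i) in (x <=? 0)%Z && (nth false bs i == (x =? 0)%Z)) (iota 0 24)].

Lemma checkFace_pt h bs (i : 'I_24) : checkFace h bs ->
  (dot6 h (prow i) <=? 0)%Z && (nth false bs i == (dot6 h (prow i) =? 0)%Z).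
Proof.
case/and4P => _ _ _ /allP /(_ i); rewrite mem_iota ltn_ord => /(_ isT).
by [].
Qed.

Local Open Scope ring_scope.

Lemma subr_eqN (x c : RR) : (x - c == - c) = (x == 0).
Proof. by rewrite subr_eq addrC subrr. Qed.

Lemma face_cert h bs : checkFace h bs -> is_face vv (mset bs).
Proof.
move=> cf; have /and4P [/eqP sh /eqP sb hb _] := cf.
split.
  apply/set0Pn; case/(has_nthP false): hb => i; rewrite sb => Hi Hn.
  by exists (Ordinal Hi); rewrite inE.
exists (\row_(j < 5) IZR (nth 0%Z h j)), (- IZR (nth 0%Z h 5)); split => i.
  have /andP [Hle _] := checkFace_pt i cf.
  rewrite dotp_vv // -[X in _ <= X]add0r lerD2r.
  by rewrite -[0]/(IZR 0) IZR_leE.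
have /andP [_ /eqP He] := checkFace_pt i cf.
rewrite dotp_vv // inE He; split.
  by move/Z.eqb_spec => ->; rewrite add0r.
move/eqP; rewrite subr_eqN -[0]/(IZR 0) => /eqP /IZR_inj ->.
by [].
Qed.
Local Close Scope ring_scope.
Definition checkRank (bs : seq bool) (rc : seq nat * seq (seq Z) * Z) : bool :=
  let: (rs, Xs, d) := rc in
  [&& d != 0%Z, size Xs == size rs, all (fun X => size X == 6) Xs,
      all (fun r => (r < 24) && nth false bs r) rs &
      all (fun p => all (fun q => dot6 (nth [::] Xs q) (prow (nth 0 rs p)) == (if p == q then d else 0%Z))
        (iota 0 (size rs))) (iota 0 (size rs))].
Local Open Scope ring_scope.

Lemma rank_cert_c bs rc : checkRank bs rc ->
  (size rc.1.1 <= \rank (restr (mset bs) Afull))%N.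
Proof.
case: rc => [[rs Xs] d] /=; case/and5P => d0 /eqP sX /allP sX6 /allP rsok /allP chk.
pose k := size rs.
pose r : 'I_k -> 'I_24 := fun p => inord (nth 0%N rs p).
have rP : forall p : 'I_k, (nth 0%N rs p < 24)%N && nth false bs (nth 0%N rs p).
  by move=> p; apply: rsok; rewrite mem_nth.
have rv : forall p : 'I_k, (r p : nat) = nth 0%N rs p.
  by move=> p; rewrite /r inordK //; case/andP: (rP p).
pose X : 'M[RR]_(5 + 1, k) := \matrix_(j, q) IZR (nth 0%Z (nth [::] Xs q) j).
apply: (@rank_cert _ _ _ _ _ r X (IZR d)).
  by rewrite -[0]/(IZR 0) IZR_eq0; apply/negP => /Z.eqb_spec H; move/eqP: d0.
apply/matrixP => p q; rewrite [LHS]mxE [RHS]mxE.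
have sq : size (nth [::] Xs q) = 6.
  by apply/eqP/sX6; rewrite mem_nth // sX.
have [s6 _] := prow_ok (proj1 (andP (rP p))).
have := chk p; rewrite mem_iota /= => /(_ (ltn_ord p)) /allP /(_ q).
rewrite mem_iota /= => /(_ (ltn_ord q)) /eqP.
rewrite -(rv p) => E.
transitivity (IZR (dot6 (nth [::] Xs q) (prow (r p)))).
  rewrite -sum6 // ?rv //; apply: eq_bigr => j _.
  rewrite mxE restrE inE rv (proj2 (andP (rP p))) Afull_E mxE mulrC.
  by rewrite rv.
rewrite E -[(p : nat) == q]/(p == q).
by case: eqP => _; [rewrite mulr1n | rewrite mulr0n].
Qed.

Definition checkFacet (bs : seq bool) (h : seq Z) (rc : seq nat * seq (seq Z) * Z) : bool :=
  [&& checkFace h bs, checkRank bs rc, size rc.1.1 == 5 & has (fun x => x != 0%Z) h].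

Lemma hcol_neq0 c : size c = 6 -> has (fun x => x != 0%Z) c -> hcol c != 0.
Proof.
move=> sc /(has_nthP 0%Z) [j]; rewrite sc => Hj nz.
apply/eqP => /matrixP /(_ (Ordinal Hj) 0); rewrite !mxE /= => /eqP.
by rewrite -[0]/(IZR 0) IZR_eq0 => /Z.eqb_spec H; move/eqP: nz.
Qed.

Lemma facet_ker bs h : checkFace h bs -> restr (mset bs) Afull *m hcol h = 0.
Proof.
move=> cf; have /and4P [/eqP sh _ _ _] := cf.
apply/matrixP => i j; rewrite ord1 restr_hcol // mxE inE.
case: ifP => // Hi; have /andP [_ /eqP] := checkFace_pt i cf.
by rewrite Hi => /esym /Z.eqb_spec ->.
Qed.

Lemma facet_cert bs h rc : checkFacet bs h rc -> is_facet vv (mset bs).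
Proof.
case/and4P => cf cr /eqP s5 nz; split; first exact: (face_cert cf).
have /and4P [/eqP sh _ _ _] := cf.
rewrite /aff_dim Am_restr; apply/eqP; rewrite eqn_leq; apply/andP; split.
  have := rank_ker_lt (hcol_neq0 sh nz) (facet_ker cf).
  by [].
by have := rank_cert_c cr; rewrite s5.
Qed.

Definition checkRidge (bs : seq bool) (h : seq Z) (rc : seq nat * seq (seq Z) * Z) : bool :=
  [&& checkFace h bs, checkRank bs rc, size rc.1.1 == 4 & count (nth false bs) (iota 0 24) == 4].

Lemma card_mset bs : #|mset bs| = count (nth false bs) (iota 0 24).
Proof. exact: card_ord_count. Qed.

Lemma ridge_cert bs h rc : checkRidge bs h rc -> is_ridge vv (mset bs).
Proof.
case/and4P => cf cr /eqP s4 /eqP c4; split; first exact: (face_cert cf).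
rewrite /aff_dim Am_restr; apply/eqP; rewrite eqn_leq; apply/andP; split.
  by have := rank_restr_card (mset bs) Afull; rewrite card_mset c4.
by have := rank_cert_c cr; rewrite s4.
Qed.
Local Close Scope ring_scope.

Lemma set5_sorted (S : {set 'I_24}) : #|S| = 5 ->
  exists i0 i1 i2 i3 i4, [/\ i0 < i1, i1 < i2, i2 < i3, i3 < i4 & i4 < 24] /\
    forall x : 'I_24, (x \in S) = ((x : nat) \in [:: i0; i1; i2; i3; i4]).
Proof.
move=> cS.
pose s := [seq val x | x <- enum S].
pose t := sort leq s.
have us : uniq s by rewrite map_inj_uniq ?enum_uniq //; exact: val_inj.
have pt : perm_eq t s by rewrite perm_sort.
have st : sorted ltn t.
  by rewrite ltn_sorted_uniq_leq (perm_uniq pt) us sort_sorted //; exact: leq_total.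
have memt : forall x : 'I_24, (x \in S) = ((x : nat) \in t).
  by move=> x; rewrite (perm_mem pt) (mem_map val_inj) mem_enum.
have szt : size t = 5 by rewrite (perm_size pt) size_map -cardE cS.
have lt24 : forall k, k \in t -> k < 24.
  by move=> k; rewrite (perm_mem pt) => /mapP [x _ ->]; exact: ltn_ord.
clear pt; clearbody t; move: st memt szt lt24.
case: t => [|i0 [|i1 [|i2 [|i3 [|i4 [|? ?]]]]]] // st memt _ lt24.
exists i0, i1, i2, i3, i4; split => //.
move: st => /= /and4P [o1 o2 o3 /andP [o4 _]].
by split => //; apply: lt24; rewrite !inE eqxx !orbT.
Qed.

Lemma sgscan_le c rs n : (forall r, r \in rs -> (dot6 c r <= 0)%Z) -> sgscan c rs false n.
Proof.
elim: rs n => //= r rs IH n H.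
have -> : (0 <? dot6 c r)%Z = false.
  by apply/negP => /Z.ltb_spec0; have := H r (mem_head _ _); lia.
by rewrite /= IH // => r' Hr'; apply: H; rewrite inE Hr' orbT.
Qed.

Lemma sgscan_ge c rs p : (forall r, r \in rs -> (0 <= dot6 c r)%Z) -> sgscan c rs p false.
Proof.
elim: rs p => //= r rs IH p H.
have -> : (dot6 c r <? 0)%Z = false.
  by apply/negP => /Z.ltb_spec0; have := H r (mem_head _ _); lia.
by rewrite /= andbF IH // => r' Hr'; apply: H; rewrite inE Hr' orbT.
Qed.

Lemma HP_prow r : r \in HP -> exists i : 'I_24, r = prow i.
Proof.
move=> /(nthP [::]) [i]; rewrite size_HP => Hi <-.
by exists (Ordinal Hi).
Qed.

Definition allT : seq bool := nseq 24 true.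
Lemma mset_allT : mset allT = setT.
Proof. by apply/setP => i; rewrite !inE nth_nseq ltn_ord. Qed.

Lemma fullRC_ok : checkRank allT fullRC.
Proof. by vm_compute. Qed.

Local Open Scope ring_scope.

Lemma rank_full : (6 <= \rank (restr setT Afull))%N.
Proof. by have := rank_cert_c fullRC_ok; rewrite mset_allT. Qed.
Lemma facet_in_L W : is_facet vv W -> exists2 e, e \in LF & W = mset e.1.
Proof.
move=> [[W0 [a [b [Hle Heq]]]] Hdim].
move: Hdim; rewrite /aff_dim Am_restr => rk5.
case: (rank_extract rk5) => S [SW cS rS].
case: (set5_sorted cS) => i0 [i1 [i2 [i3 [i4 [[o1 o2 o3 o4 o5] memS]]]]].
have := checkA_sound o1 o2 o3 o4 o5.
set c := cross5 i0 i1 i2 i3 i4.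
case/and4P => /eqP sc /allP orth nz sg.
have Hc : restr S Afull *m hcol c = 0.
  apply/matrixP => i j; rewrite ord1 restr_hcol // mxE memS.
  by case: ifP => // Hi; move: (orth _ Hi) => /Z.eqb_spec ->.
have Hh : restr S Afull *m hR a b = 0.
  apply/matrixP => i j; rewrite ord1 restr_hR mxE.
  case: ifP => // iS; have iW := subsetP SW i iS.
  by rewrite (proj1 (Heq i) iW) subrr.
have c0 := hcol_neq0 sc nz.
case: (ker_prop rS Hh Hc c0) => l Hl.
have key : forall i, dotp a (vv i) - b = l * IZR (dot6 c (prow i)).
  move=> i; have := restr_hR setT a b i.
  rewrite in_setT Hl -scalemxAr mxE restr_hcol // in_setT.
  by move=> <-.
have [l0|l0] := eqVneq l 0.
  have WT : W = setT.
    apply/setP => i; rewrite in_setT; apply/(Heq i); apply/eqP.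
    by rewrite -subr_eq0 key l0 mul0r.
  move: rk5; rewrite WT => r5; have := rank_full; rewrite r5.
  by [].
have sg' : sgscan c HP false false.
  have [lp|ln] := ltrP 0 l.
  - apply: sgscan_le => r /HP_prow [i ->].
    have := Hle i; rewrite -subr_le0 key pmulr_rle0 // -[0]/(IZR 0) IZR_leE.
    by move/Z.leb_spec0.
  - have ln' : l < 0 by rewrite lt_neqAle l0 ln.
    apply: sgscan_ge => r /HP_prow [i ->].
    have := Hle i; rewrite -subr_le0 key nmulr_rle0 // -[0]/(IZR 0) IZR_leE.
    by move/Z.leb_spec0.
move: sg; rewrite sg' => /mapP [e eL ee].
exists e => //; apply/setP => i; rewrite inE -ee (nth_map [::]) ?size_HP //.
rewrite -/(prow i).
apply/idP/idP.
  move/(Heq i)/eqP; rewrite -subr_eq0 key mulf_eq0 (negbTE l0) /= -[0]/(IZR 0) IZR_eq0.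
  by [].
move=> H; apply/(Heq i); apply/eqP; rewrite -subr_eq0 key.
by move/Z.eqb_spec: H => ->; rewrite mulr0.
Qed.
Local Close Scope ring_scope.
Definition bF1 := nth [::] pathB 0.
Definition bF2 := nth [::] pathB 6.
Definition checkD : bool := all (fun e => all (fun e' => (e.2 <= e'.2.+1) ||
   (count (fun k => nth false e.1 k && nth false e'.1 k) (iota 0 24) <= 3)) LF) LF.
Definition checkD0 : bool := [&& all (fun e => (e.1 == bF2) ==> (e.2 == 0)) LF,
   all (fun e => size e.1 == 24) LF, size bF2 == 24 & (bF1, 6) \in LF].
Lemma checkD_ok : checkD && checkD0.
Proof. by vm_compute. Qed.

Lemma mset_inj b b' : size b = 24 -> size b' = 24 -> mset b = mset b' -> b = b'.
Proof.
move=> sb sb' E; apply: (eq_from_nth (x0 := false)); first by rewrite sb sb'.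
move=> k; rewrite sb => Hk.
by have := congr1 (fun S : {set 'I_24} => Ordinal Hk \in S) E; rewrite /= !inE.
Qed.

Lemma walk_lb m : forall F, fr_walk vv m F (mset bF2) ->
  forall e, e \in LF -> F = mset e.1 -> e.2 <= m.
Proof.
have /andP [/allP D /and4P [/allP D0 /allP Ds /eqP s2 _]] := checkD_ok.
elim: m => [|m IH] F /=.
  move=> [FF2 _] e eL FE.
  have E : e.1 = bF2 by apply: mset_inj => //; [exact/eqP/Ds | rewrite -FE].
  by have := D0 e eL; rewrite E eqxx /= => /eqP ->.
move=> [H [[fF fH _ [Rg [rR sub]]] wH]] e eL FE.
case: (facet_in_L fH) => e' e'L HE.
have le' := IH H wH e' e'L HE.
have c4 : 4 <= count (fun k => nth false e.1 k && nth false e'.1 k) (iota 0 24).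
  rewrite -card_ord_count.
  have : 4 <= #|Rg|.
    case: rR => _; rewrite /aff_dim Am_restr => r4.
    by have := rank_restr_card Rg Afull; rewrite r4.
  move/leq_trans; apply; apply: subset_leq_card.
  apply: (subset_trans sub); apply/subsetP => i; rewrite FE HE !inE.
  by [].
have := D e eL => /allP /(_ e' e'L) /orP [le|].
  by apply: (leq_trans le).
by move=> c3; have := leq_trans c4 c3.
Qed.

Definition dflt : seq nat * seq (seq Z) * Z := ([::], [::], 0%Z).
Definition checkPath : bool :=
  [&& all (fun k => checkFacet (nth [::] pathB k) (nth [::] pathH k) (nth dflt pathRC k)) (iota 0 7) &
      all (fun k => [&& checkRidge (nth [::] ridgeB k) (nth [::] ridgeH k) (nth dflt ridgeRC k),
          all (fun i => nth false (nth [::] ridgeB k) i ==>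
               (nth false (nth [::] pathB k) i && nth false (nth [::] pathB k.+1) i)) (iota 0 24) &
          has (fun i => nth false (nth [::] pathB k) i && ~~ nth false (nth [::] pathB k.+1) i) (iota 0 24)])
        (iota 0 6)].
Lemma checkPath_ok : checkPath.
Proof. by vm_compute. Qed.

Lemma path_facet k : k < 7 -> is_facet vv (mset (nth [::] pathB k)).
Proof.
move=> Hk; have /andP [/allP P _] := checkPath_ok.
by apply: facet_cert; apply: P; rewrite mem_iota.
Qed.

Lemma mset_neq b b' : has (fun i => nth false b i && ~~ nth false b' i) (iota 0 24) -> mset b != mset b'.
Proof.
case/hasP => i; rewrite mem_iota /= => Hi /andP [h1 h2].
apply/eqP => E; have := congr1 (fun S : {set 'I_24} => Ordinal Hi \in S) E; rewrite /= !inE.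
by rewrite h1 (negbTE h2).
Qed.

Lemma path_adj k : k < 6 -> fr_adj vv (mset (nth [::] pathB k)) (mset (nth [::] pathB k.+1)).
Proof.
move=> Hk; have /andP [_ /allP P] := checkPath_ok.
have Pk : k \in iota 0 6 by rewrite mem_iota.
have /and3P [cr /allP Hsub nq] := P k Pk.
split; first exact: path_facet (ltn_trans Hk _).
- exact: path_facet.
- exact: mset_neq.
exists (mset (nth [::] ridgeB k)); split; first exact: ridge_cert cr.
apply/subsetP => i; rewrite !inE => Hi.
by have := Hsub i; rewrite mem_iota ltn_ord Hi /= => /(_ isT).
Qed.

Lemma path_walk n : n <= 6 -> fr_walk vv n (mset (nth [::] pathB (6 - n))) (mset bF2).
Proof.
elim: n => [_|n IH Hn]; first by rewrite subn0; split => //; exact: path_facet.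
exists (mset (nth [::] pathB (6 - n))); split; last by apply: IH; exact: ltnW.
have := @path_adj (6 - n.+1); rewrite subnSK //.
by apply; lia.
Qed.
Definition checkV : bool := (size vcert == 24) && all (fun i => let h := nth [::] vcert i in
  [&& size h == 6, dot6 h (prow i) == 0%Z &
      all (fun j => (j == i) || (dot6 h (prow j) <=? -1)%Z) (iota 0 24)]) (iota 0 24).
Lemma checkV_ok : checkV.
Proof. by vm_compute. Qed.

Local Open Scope ring_scope.

Lemma dotp_sum (a : 'rV[RR]_5) (lam : 'I_24 -> RR) (w : 'I_24 -> 'rV[RR]_5) :
  dotp a (\sum_(j < 24) lam j *: w j) = \sum_(j < 24) lam j * dotp a (w j).
Proof.
rewrite /dotp; under eq_bigr do rewrite summxE big_distrr /=.
rewrite exchange_big; apply: eq_bigr => j _; rewrite big_distrr; apply: eq_bigr => k _.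
by rewrite mxE mulrCA.
Qed.

Lemma allv : all_vertices vv.
Proof.
move=> i [lam [l0 lS l1 lv]].
have /andP [_ /allP V] := checkV_ok.
have := V i; rewrite mem_iota ltn_ord => /(_ isT).
set h := nth [::] vcert i; case/and3P => /eqP sh /eqP hi /allP hj.
set a := \row_(j < 5) IZR (nth 0%Z h j).
have E : dotp a (vv i) = dotp a (\sum_(j < 24) lam j *: vv j) by rewrite lv.
rewrite dotp_sum dotp_vv // hi in E.
have S : \sum_(j < 24) lam j * dotp a (vv j) =
         \sum_(j < 24) lam j * IZR (dot6 h (prow j)) - IZR (nth 0%Z h 5).
  rewrite (eq_bigr (fun j => lam j * IZR (dot6 h (prow j)) - lam j * IZR (nth 0%Z h 5))).
    by rewrite sumrB -mulr_suml l1 mul1r.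
  by move=> j _; rewrite dotp_vv // mulrBr.
rewrite S in E.
have Z0 : \sum_(j < 24) lam j * IZR (dot6 h (prow j)) = 0.
  by move/addIr: E => <-.
have : \sum_(j < 24) lam j * IZR (dot6 h (prow j)) <= \sum_(j < 24) lam j * (-1).
  apply: ler_sum => j _.
  have [->|ne] := eqVneq j i.
    by rewrite (lS i) ?mul0r // !inE eqxx.
  apply: ler_wpM2l => //.
  have := hj j; rewrite mem_iota ltn_ord /= => /(_ isT); move: ne; rewrite -val_eqE => /negbTE -> /=.
  by rewrite -IZR_leE.
rewrite Z0 -mulr_suml l1 mul1r.
by rewrite lerNr oppr0 ler10.
Qed.

Lemma fulld : full_dim vv.
Proof.
move=> [a [b [a0 Hab]]].
have Hh : restr setT Afull *m hR a b = 0.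
  by apply/matrixP => i j; rewrite ord1 restr_hR mxE in_setT Hab subrr.
have h0 : hR a b != 0.
  apply: contra a0 => /eqP H; apply/eqP/matrixP => x y.
  move/matrixP: H => /(_ (lshift 1 y) 0); rewrite col_mxEu !mxE ord1.
  by [].
have := rank_ker_lt h0 Hh; have := rank_full.
move=> r1 r2; have := leq_ltn_trans r1 r2.
by rewrite ltnn.
Qed.
Local Close Scope ring_scope.
Definition e5 : seq Z := [:: 0; 0; 0; 0; 1; 0]%Z.
Definition checkB : bool :=
  [&& all (fun i => nth false bF1 i || nth false bF2 i) (iota 0 24),
      all (fun i => nth false bF1 i ==> (dot6 e5 (prow i) == 1%Z)) (iota 0 24),
      all (fun i => nth false bF2 i ==> (dot6 e5 (prow i) == (-1)%Z)) (iota 0 24),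
      count (nth false bF1) (iota 0 24) == 12 & count (nth false bF2) (iota 0 24) == 12].
Lemma checkB_ok : checkB.
Proof. by vm_compute. Qed.

Local Open Scope ring_scope.
Lemma bases : prismatoid_bases vv (mset bF1) (mset bF2).
Proof.
have /and5P [/allP U /allP B1 /allP B2 _ _] := checkB_ok.
split.
- exact: (@path_facet 0).
- exact: (@path_facet 6).
- by apply: mset_neq; vm_compute.
- apply/setP => i; rewrite !inE; have := U i; rewrite mem_iota ltn_ord => /(_ isT).
  by [].
- exists (\row_(j < 5) IZR (nth 0%Z e5 j)), (IZR 1), (IZR (-1)); split.
    apply/eqP => /matrixP /(_ 0 (inord 4)); rewrite !mxE inordK //= => /eqP.
    by rewrite -[0]/(IZR 0) IZR_eq0.
  split => i; rewrite inE => Hi; rewrite dotp_vv //.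
    by have := B1 i; rewrite mem_iota ltn_ord Hi => /(_ isT) /eqP ->; rewrite /= subr0.
  by have := B2 i; rewrite mem_iota ltn_ord Hi => /(_ isT) /eqP ->; rewrite /= subr0.
Qed.
Local Close Scope ring_scope.

Theorem mainTheorem1 :
  exists (v : 'I_24 -> 'rV[Rdefinitions.R]_5) (F1 F2 : {set 'I_24}),
    [/\ all_vertices v /\ full_dim v, prismatoid_bases v F1 F2,
        #|F1| = 12, #|F2| = 12 & fr_dist v F1 F2 6].
Proof.
have /and5P [_ _ _ /eqP c1 /eqP c2] := checkB_ok.
exists vv, (mset bF1), (mset bF2); split.
- split; [exact: allv | exact: fulld].
- exact: bases.
- by rewrite card_mset.
- by rewrite card_mset.
- split; first by have := @path_walk 6 isT; rewrite subnn.
  move=> m Hm W.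
  have /andP [_ /and4P [_ _ _ inF1]] := checkD_ok.
  have H6 := walk_lb W inF1 erefl.
  by have := leq_ltn_trans H6 Hm; rewrite ltnn.
Qed.
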